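(* Let $M_L\le GL(7,\mathbb{C})$ be the group generated by the permutation matrices $(12),(23),(34),(56),(67)$ and the matrix $A$ defined in the context. Then $M_L$ is isomorphic to the Coxeter group $W(D_6)$, which has $23040$ elements.
   Context: A permutation $\sigma\in S_7$ is identified with the $7\times7$ permutation matrix sending $e_i$ to $e_{\sigma(i)}$. The matrix $A$ is \[ A=\begin{pmatrix} 1&0&0&0&0&0&0\\ 0&1&0&0&0&0&0\\ 0&0&-1&0&0&0&1\\ 0&0&0&-1&0&0&1\\ 0&0&-1&-1&1&0&1\\ 0&0&-1&-1&0&1&1\\ 0&0&0&0&0&0&1 \end{pmatrix}. \] $W(D_6)$ denotes the Coxeter group of type $D_6$. *)

(* Defs.v *)
From HB Require Import structures.
From mathcomp Require Import all_boot all_order all_algebra all_fingroup all_field.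
Set Implicit Arguments. Unset Strict Implicit. Unset Printing Implicit Defensive.
Import GRing.Theory Num.Theory.
Local Open Scope ring_scope.

(* Complex numbers: algC (algebraic closure of Q inside C); all matrices here
   have integer entries, so GL(7, algC) is a faithful stand-in for GL(7, C)
   (the generated subgroup is literally the same set of integer matrices). *)

(* 1-based index k in {1,...,7} as an element of 'I_7 = {0,...,6}. *)
Definition ix (k : nat) : 'I_7 := inord k.-1.

(* Permutation matrix of s : 'S_7 sending e_j to e_(s j) (column convention). *)
Definition pmx (s : 'S_7) : 'M[algC]_7 := \matrix_(i, j) (i == s j)%:R.

Definition tp (a b : nat) : 'S_7 := tperm (ix a) (ix b).

Definition A_rows : seq (seq int) :=
  [:: [:: 1; 0; 0; 0; 0; 0; 0];
      [:: 0; 1; 0; 0; 0; 0; 0];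
      [:: 0; 0; -1; 0; 0; 0; 1];
      [:: 0; 0; 0; -1; 0; 0; 1];
      [:: 0; 0; -1; -1; 1; 0; 1];
      [:: 0; 0; -1; -1; 0; 1; 1];
      [:: 0; 0; 0; 0; 0; 0; 1]]%Z.

Definition A : 'M[algC]_7 :=
  \matrix_(i, j) ((nth 0%Z (nth [::] A_rows i) j)%:~R).

Definition ML_gens (M : 'M[algC]_7) : Prop :=
  M = pmx (tp 1 2) \/ M = pmx (tp 2 3) \/ M = pmx (tp 3 4) \/
  M = pmx (tp 5 6) \/ M = pmx (tp 6 7) \/ M = A.

Inductive gen_mxgroup (S : 'M[algC]_7 -> Prop) : 'M[algC]_7 -> Prop :=
  | gen_one : gen_mxgroup S 1%:M
  | gen_base M : S M -> gen_mxgroup S M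
  | gen_mul M N : gen_mxgroup S M -> gen_mxgroup S N -> gen_mxgroup S (M *m N)
  | gen_inv M : gen_mxgroup S M -> M \in unitmx -> gen_mxgroup S (invmx M).

Definition ML : 'M[algC]_7 -> Prop := gen_mxgroup ML_gens.

(* The Coxeter group W(D_6), given by its Coxeter presentation with Dynkin
   diagram  s1 - s2 - s3 - s4 - s5,  s4 - s6. *)
Definition is_W_D6 (gT : finGroupType) (W : {group gT}) : Prop :=
  (W \isog Grp (s1 : s2 : s3 : s4 : s5 : s6 :
     s1 ^+ 2, s2 ^+ 2, s3 ^+ 2, s4 ^+ 2, s5 ^+ 2, s6 ^+ 2,
     (s1 * s2) ^+ 3, (s2 * s3) ^+ 3, (s3 * s4) ^+ 3, (s4 * s5) ^+ 3,
     (s4 * s6) ^+ 3,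
     (s1 * s3) ^+ 2, (s1 * s4) ^+ 2, (s1 * s5) ^+ 2, (s1 * s6) ^+ 2,
     (s2 * s4) ^+ 2, (s2 * s5) ^+ 2, (s2 * s6) ^+ 2,
     (s3 * s5) ^+ 2, (s3 * s6) ^+ 2, (s5 * s6) ^+ 2))%g.

(* Main.v *)
Require Import Defs.
From HB Require Import structures.
From mathcomp Require Import all_boot all_order all_algebra all_fingroup all_field.
Set Implicit Arguments. Unset Strict Implicit. Unset Printing Implicit Defensive.

Module Data_.
Import GRing.Theory Num.Theory.
Local Open Scope ring_scope.
Definition Tl : seq (seq int) := ([:: [:: 1; 0; 0; 0; 0; 0; 0];
  [:: 0; 1; 0; 0; 0; 0; 0];
  [:: 0; 0; 1; 0; 0; 0; 0];
  [:: 0; 0; 0; 1; 0; 0; 0];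
  [:: 0; 0; 0; 0; 1; 0; 0];
  [:: 0; 0; 0; 0; 0; 1; 0];
  [:: 0; 0; 0; 0; 0; 0; 1];
  [:: 0; 0; -1; 0; 0; 0; 1];
  [:: 0; 0; 0; -1; 0; 0; 1];
  [:: 0; 0; -1; -1; 1; 0; 1];
  [:: 0; 0; -1; -1; 0; 1; 1];
  [:: 0; -1; 0; 0; 0; 0; 1];
  [:: 0; 0; -1; 0; 0; 1; 0];
  [:: 0; 0; 0; -1; 0; 1; 0];
  [:: 0; -1; 0; -1; 1; 0; 1];
  [:: 0; 0; -1; -1; 1; 1; 0];
  [:: 0; -1; 0; -1; 0; 1; 1];
  [:: -1; 0; 0; 0; 0; 0; 1];
  [:: 0; -1; 0; 0; 0; 1; 0];
  [:: 0; 0; -1; 0; 1; 0; 0];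
  [:: 0; 0; 0; -1; 1; 0; 0];
  [:: -1; 0; 0; -1; 1; 0; 1];
  [:: 0; -1; -1; 0; 1; 0; 1];
  [:: 0; -1; 0; -1; 1; 1; 0];
  [:: -1; 0; 0; -1; 0; 1; 1];
  [:: 0; -1; -1; 0; 0; 1; 1];
  [:: -1; 0; 0; 0; 0; 1; 0];
  [:: 0; -1; 0; 0; 1; 0; 0];
  [:: 0; -1; -1; -1; 0; 1; 1];
  [:: -1; 0; -1; 0; 1; 0; 1];
  [:: -1; 0; 0; -1; 1; 1; 0];
  [:: 0; -1; -1; 0; 1; 1; 0];
  [:: 0; -1; -2; -1; 1; 1; 1];
  [:: -1; 0; -1; 0; 0; 1; 1];
  [:: -1; 0; 0; 0; 1; 0; 0];
  [:: -1; 0; -1; -1; 0; 1; 1];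
  [:: 0; -1; -1; -1; 1; 0; 1];
  [:: -1; -1; 0; 0; 1; 0; 1];
  [:: -1; 0; -1; 0; 1; 1; 0];
  [:: -1; 0; -2; -1; 1; 1; 1];
  [:: 0; -1; -1; -2; 1; 1; 1];
  [:: 0; -2; -1; -1; 1; 1; 1];
  [:: -1; -1; 0; 0; 0; 1; 1];
  [:: -1; 0; -1; -1; 1; 0; 1];
  [:: -1; -1; 0; -1; 0; 1; 1];
  [:: 0; -1; -1; -1; 1; 1; 0];
  [:: -1; -1; 0; 0; 1; 1; 0];
  [:: -1; -1; -1; -1; 1; 0; 2];
  [:: -1; 0; -1; -2; 1; 1; 1];
  [:: -1; -2; 0; -1; 1; 1; 1];
  [:: -2; 0; -1; -1; 1; 1; 1];
  [:: -1; -1; -1; -1; 0; 1; 2];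
  [:: -1; -1; 0; -1; 1; 0; 1];
  [:: -1; 0; -1; -1; 1; 1; 0];
  [:: -1; -1; -1; 0; 0; 1; 1];
  [:: -1; -1; -2; -2; 1; 1; 2];
  [:: -1; -1; -1; -1; 1; 2; 0];
  [:: -1; -1; 0; -2; 1; 1; 1];
  [:: -2; -1; 0; -1; 1; 1; 1];
  [:: -1; -2; -1; 0; 1; 1; 1];
  [:: -1; -2; -2; -1; 1; 1; 2];
  [:: -1; -1; -1; -1; 0; 2; 1];
  [:: -1; -1; -1; 0; 1; 0; 1];
  [:: -1; -1; 0; -1; 1; 1; 0];
  [:: -1; -2; -1; -2; 1; 1; 2];
  [:: -1; -1; -2; -2; 1; 2; 1];
  [:: -1; -1; -1; -1; 2; 1; 0];
  [:: -1; -1; -2; 0; 1; 1; 1];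
  [:: -2; -1; -1; 0; 1; 1; 1];
  [:: -2; -1; -2; -1; 1; 1; 2];
  [:: -1; -2; -2; -1; 1; 2; 1];
  [:: -1; -1; -1; -1; 2; 0; 1];
  [:: -1; -1; -1; 0; 1; 1; 0];
  [:: -1; -1; -2; -1; 1; 1; 1];
  [:: -2; -1; -1; -2; 1; 1; 2];
  [:: -1; -2; -1; -2; 1; 2; 1];
  [:: -1; -1; -2; -2; 2; 1; 1];
  [:: -2; -2; -1; -1; 1; 1; 2];
  [:: -2; -1; -2; -1; 1; 2; 1];
  [:: -1; -2; -2; -1; 2; 1; 1];
  [:: -1; -1; -1; -2; 1; 1; 1];
  [:: -1; -2; -1; -1; 1; 1; 1];
  [:: -2; -1; -1; -2; 1; 2; 1];
  [:: -1; -2; -1; -2; 2; 1; 1];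
  [:: -2; -2; -1; -1; 1; 2; 1];
  [:: -2; -1; -2; -1; 2; 1; 1];
  [:: -2; -1; -1; -1; 1; 1; 1];
  [:: -2; -1; -1; -2; 2; 1; 1];
  [:: -2; -2; -1; -1; 2; 1; 1];
  [:: -2; -2; -2; -2; 1; 2; 2];
  [:: -2; -2; -2; -2; 2; 1; 2];
  [:: -2; -2; -2; -2; 2; 2; 1]])%Z.

Definition ptbls : seq (seq nat) := [:: [:: 1; 0; 2; 3; 4; 5; 6; 7; 8; 9; 10; 17; 12; 13; 21; 15; 24; 11; 26; 19; 20; 14; 29; 30; 16; 33; 18; 34; 35; 22; 23; 38; 39; 25; 27; 28; 43; 37; 31; 32; 48; 50; 42; 36; 44; 53; 46; 47; 40; 58; 41; 51; 52; 45; 54; 55; 56; 57; 49; 68; 69; 61; 62; 63; 74; 65; 66; 67; 59; 60; 78; 71; 72; 73; 64; 82; 76; 77; 70; 85; 80; 86; 75; 87; 84; 79; 81; 83; 88; 89; 90; 91];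
  [:: 0; 2; 1; 3; 4; 5; 6; 11; 8; 14; 16; 7; 18; 13; 9; 23; 10; 17; 12; 27; 20; 21; 22; 15; 24; 25; 26; 19; 28; 37; 30; 31; 41; 42; 34; 44; 36; 29; 46; 49; 40; 32; 33; 52; 35; 45; 38; 47; 57; 39; 58; 51; 43; 63; 54; 64; 56; 48; 50; 67; 60; 61; 62; 53; 55; 75; 66; 59; 68; 77; 70; 71; 72; 81; 74; 65; 83; 69; 84; 79; 80; 73; 82; 76; 78; 88; 86; 87; 85; 89; 90; 91];
  [:: 0; 1; 3; 2; 4; 5; 6; 8; 7; 9; 10; 11; 13; 12; 22; 15; 25; 17; 18; 20; 19; 29; 14; 31; 33; 16; 26; 27; 28; 21; 38; 23; 40; 24; 34; 35; 36; 37; 30; 48; 32; 41; 42; 43; 54; 45; 46; 47; 39; 59; 50; 51; 62; 53; 44; 55; 56; 67; 68; 49; 64; 61; 52; 72; 60; 65; 66; 57; 58; 74; 75; 71; 63; 80; 69; 70; 76; 77; 82; 83; 73; 81; 78; 79; 84; 87; 86; 85; 88; 89; 90; 91];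
  [:: 0; 1; 2; 3; 5; 4; 6; 7; 8; 10; 9; 11; 19; 20; 16; 15; 14; 17; 27; 12; 13; 24; 25; 23; 21; 22; 34; 18; 36; 33; 30; 31; 32; 29; 26; 43; 28; 42; 38; 39; 40; 41; 37; 35; 52; 45; 46; 51; 48; 49; 50; 47; 44; 53; 62; 55; 66; 57; 58; 59; 60; 71; 54; 63; 64; 76; 56; 67; 68; 69; 79; 61; 72; 73; 74; 83; 65; 77; 85; 70; 80; 81; 87; 75; 88; 78; 86; 82; 84; 90; 89; 91];
  [:: 0; 1; 2; 3; 4; 6; 5; 12; 13; 15; 10; 18; 7; 8; 23; 9; 16; 26; 11; 19; 20; 30; 31; 14; 24; 25; 17; 27; 28; 38; 21; 22; 32; 33; 34; 35; 45; 46; 29; 39; 40; 41; 42; 53; 44; 36; 37; 56; 48; 49; 50; 61; 63; 43; 54; 65; 47; 57; 58; 59; 70; 51; 72; 52; 75; 55; 71; 67; 68; 78; 60; 66; 62; 73; 82; 64; 76; 84; 69; 79; 80; 81; 74; 83; 77; 85; 86; 87; 88; 89; 91; 90];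
  [:: 0; 1; 7; 8; 9; 10; 6; 2; 3; 4; 5; 11; 13; 12; 22; 15; 25; 17; 28; 20; 19; 29; 14; 32; 33; 16; 35; 36; 18; 21; 39; 40; 23; 24; 43; 26; 27; 47; 48; 30; 31; 41; 51; 34; 54; 45; 55; 37; 38; 60; 50; 42; 62; 53; 44; 46; 65; 67; 69; 64; 49; 61; 52; 73; 59; 56; 76; 57; 74; 58; 75; 71; 80; 63; 68; 70; 66; 77; 82; 83; 72; 81; 78; 79; 89; 87; 86; 85; 90; 84; 88; 91]].

Definition xtbls : seq (seq nat) := [:: [:: 0; 1; 2; 3; 5; 4; 6; 7; 8; 10; 9; 11; 19; 20; 16; 15; 14; 17; 27; 12; 13; 24; 25; 23; 21; 22; 34; 18; 36; 33; 30; 31; 32; 29; 26; 43; 28; 42; 38; 39; 40; 41; 37; 35; 52; 45; 46; 51; 48; 49; 50; 47; 44; 53; 62; 55; 66; 57; 58; 59; 60; 71; 54; 63; 64; 76; 56; 67; 68; 69; 79; 61; 72; 73; 74; 83; 65; 77; 85; 70; 80; 81; 87; 75; 88; 78; 86; 82; 84; 90; 89; 91];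
  [:: 0; 1; 2; 3; 4; 6; 5; 12; 13; 15; 10; 18; 7; 8; 23; 9; 16; 26; 11; 19; 20; 30; 31; 14; 24; 25; 17; 27; 28; 38; 21; 22; 32; 33; 34; 35; 45; 46; 29; 39; 40; 41; 42; 53; 44; 36; 37; 56; 48; 49; 50; 61; 63; 43; 54; 65; 47; 57; 58; 59; 70; 51; 72; 52; 75; 55; 71; 67; 68; 78; 60; 66; 62; 73; 82; 64; 76; 84; 69; 79; 80; 81; 74; 83; 77; 85; 86; 87; 88; 89; 91; 90];
  [:: 0; 1; 8; 7; 9; 10; 6; 3; 2; 4; 5; 11; 12; 13; 14; 15; 16; 17; 28; 19; 20; 21; 22; 40; 24; 25; 35; 36; 18; 29; 48; 32; 31; 33; 43; 26; 27; 47; 39; 38; 23; 41; 51; 34; 44; 45; 55; 37; 30; 64; 50; 42; 52; 53; 54; 46; 65; 57; 74; 60; 59; 61; 62; 80; 49; 56; 76; 67; 69; 68; 70; 71; 73; 72; 58; 75; 66; 77; 78; 79; 63; 81; 82; 83; 89; 85; 86; 87; 90; 84; 88; 91];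
  [:: 0; 2; 1; 3; 4; 5; 6; 11; 8; 14; 16; 7; 18; 13; 9; 23; 10; 17; 12; 27; 20; 21; 22; 15; 24; 25; 26; 19; 28; 37; 30; 31; 41; 42; 34; 44; 36; 29; 46; 49; 40; 32; 33; 52; 35; 45; 38; 47; 57; 39; 58; 51; 43; 63; 54; 64; 56; 48; 50; 67; 60; 61; 62; 53; 55; 75; 66; 59; 68; 77; 70; 71; 72; 81; 74; 65; 83; 69; 84; 79; 80; 73; 82; 76; 78; 88; 86; 87; 85; 89; 90; 91];
  [:: 1; 0; 2; 3; 4; 5; 6; 7; 8; 9; 10; 17; 12; 13; 21; 15; 24; 11; 26; 19; 20; 14; 29; 30; 16; 33; 18; 34; 35; 22; 23; 38; 39; 25; 27; 28; 43; 37; 31; 32; 48; 50; 42; 36; 44; 53; 46; 47; 40; 58; 41; 51; 52; 45; 54; 55; 56; 57; 49; 68; 69; 61; 62; 63; 74; 65; 66; 67; 59; 60; 78; 71; 72; 73; 64; 82; 76; 77; 70; 85; 80; 86; 75; 87; 84; 79; 81; 83; 88; 89; 90; 91];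
  [:: 0; 1; 3; 2; 4; 5; 6; 8; 7; 9; 10; 11; 13; 12; 22; 15; 25; 17; 18; 20; 19; 29; 14; 31; 33; 16; 26; 27; 28; 21; 38; 23; 40; 24; 34; 35; 36; 37; 30; 48; 32; 41; 42; 43; 54; 45; 46; 47; 39; 59; 50; 51; 62; 53; 44; 55; 56; 67; 68; 49; 64; 61; 52; 72; 60; 65; 66; 57; 58; 74; 75; 71; 63; 80; 69; 70; 76; 77; 82; 83; 73; 81; 78; 79; 84; 87; 86; 85; 88; 89; 90; 91]].

Definition mlwords : seq (seq nat) := [:: [:: 3];
  [:: 4];
  [:: 2; 5];
  [:: 1];
  [:: 0];
  [:: 2]].

Definition xwords : seq (seq nat) := [:: [:: 4];
  [:: 3];
  [:: 5];
  [:: 0];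
  [:: 1];
  [:: 2; 5]].

Definition Mrows : seq (seq (seq int)) := ([:: [:: [:: 0; 1; 0; 0; 0; 0; 0];
  [:: 1; 0; 0; 0; 0; 0; 0];
  [:: 0; 0; 1; 0; 0; 0; 0];
  [:: 0; 0; 0; 1; 0; 0; 0];
  [:: 0; 0; 0; 0; 1; 0; 0];
  [:: 0; 0; 0; 0; 0; 1; 0];
  [:: 0; 0; 0; 0; 0; 0; 1]];
  [:: [:: 1; 0; 0; 0; 0; 0; 0];
  [:: 0; 0; 1; 0; 0; 0; 0];
  [:: 0; 1; 0; 0; 0; 0; 0];
  [:: 0; 0; 0; 1; 0; 0; 0];
  [:: 0; 0; 0; 0; 1; 0; 0];
  [:: 0; 0; 0; 0; 0; 1; 0];
  [:: 0; 0; 0; 0; 0; 0; 1]];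
  [:: [:: 1; 0; 0; 0; 0; 0; 0];
  [:: 0; 1; 0; 0; 0; 0; 0];
  [:: 0; 0; 0; 1; 0; 0; 0];
  [:: 0; 0; 1; 0; 0; 0; 0];
  [:: 0; 0; 0; 0; 1; 0; 0];
  [:: 0; 0; 0; 0; 0; 1; 0];
  [:: 0; 0; 0; 0; 0; 0; 1]];
  [:: [:: 1; 0; 0; 0; 0; 0; 0];
  [:: 0; 1; 0; 0; 0; 0; 0];
  [:: 0; 0; 1; 0; 0; 0; 0];
  [:: 0; 0; 0; 1; 0; 0; 0];
  [:: 0; 0; 0; 0; 0; 1; 0];
  [:: 0; 0; 0; 0; 1; 0; 0];
  [:: 0; 0; 0; 0; 0; 0; 1]];
  [:: [:: 1; 0; 0; 0; 0; 0; 0];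
  [:: 0; 1; 0; 0; 0; 0; 0];
  [:: 0; 0; 1; 0; 0; 0; 0];
  [:: 0; 0; 0; 1; 0; 0; 0];
  [:: 0; 0; 0; 0; 1; 0; 0];
  [:: 0; 0; 0; 0; 0; 0; 1];
  [:: 0; 0; 0; 0; 0; 1; 0]]])%Z.

Definition levels : seq (seq nat * seq (seq nat) * seq (seq nat * nat * seq (nat * seq nat * seq nat))) :=
 [:: ([:: 4], [:: [::];
  [:: 4]],
 [:: ([::], 4, [::]);
  ([:: 4], 4, [:: (0, [:: 4; 4], [::])])]);
 ([:: 3; 4], [:: [::];
  [:: 3];
  [:: 3; 4]],
 [:: ([::], 3, [::]);
  ([::], 4, [::]);
  ([:: 3], 3, [:: (0, [:: 3; 3], [::])]);
  ([:: 3], 4, [::]);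
  ([:: 3; 4], 3, [:: (0, [:: 3; 4; 3], [:: 4; 3; 4])]);
  ([:: 3; 4], 4, [:: (1, [:: 4; 4], [::])])]);
 ([:: 3; 4; 5], [:: [::];
  [:: 5];
  [:: 5; 3];
  [:: 5; 3; 4]],
 [:: ([::], 3, [::]);
  ([::], 4, [::]);
  ([::], 5, [::]);
  ([:: 5], 3, [::]);
  ([:: 5], 4, [:: (0, [:: 5; 4], [:: 4; 5])]);
  ([:: 5], 5, [:: (0, [:: 5; 5], [::])]);
  ([:: 5; 3], 3, [:: (1, [:: 3; 3], [::])]);
  ([:: 5; 3], 4, [::]);
  ([:: 5; 3], 5, [:: (0, [:: 5; 3; 5], [:: 3; 5; 3])]);
  ([:: 5; 3; 4], 3, [:: (1, [:: 3; 4; 3], [:: 4; 3; 4]);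
  (0, [:: 5; 4], [:: 4; 5])]);
  ([:: 5; 3; 4], 4, [:: (2, [:: 4; 4], [::])]);
  ([:: 5; 3; 4], 5, [:: (2, [:: 4; 5], [:: 5; 4]);
  (0, [:: 5; 3; 5], [:: 3; 5; 3])])]);
 ([:: 2; 3; 4; 5], [:: [::];
  [:: 2];
  [:: 2; 3];
  [:: 2; 3; 4];
  [:: 2; 3; 5];
  [:: 2; 3; 4; 5];
  [:: 2; 3; 4; 5; 3];
  [:: 2; 3; 4; 5; 3; 2]],
 [:: ([::], 2, [::]);
  ([::], 3, [::]);
  ([::], 4, [::]);
  ([::], 5, [::]);
  ([:: 2], 2, [:: (0, [:: 2; 2], [::])]);
  ([:: 2], 3, [::]);
  ([:: 2], 4, [:: (0, [:: 2; 4], [:: 4; 2])]);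
  ([:: 2], 5, [:: (0, [:: 2; 5], [:: 5; 2])]);
  ([:: 2; 3], 2, [:: (0, [:: 2; 3; 2], [:: 3; 2; 3])]);
  ([:: 2; 3], 3, [:: (1, [:: 3; 3], [::])]);
  ([:: 2; 3], 4, [::]);
  ([:: 2; 3], 5, [::]);
  ([:: 2; 3; 4], 2, [:: (2, [:: 4; 2], [:: 2; 4]);
  (0, [:: 2; 3; 2], [:: 3; 2; 3])]);
  ([:: 2; 3; 4], 3, [:: (1, [:: 3; 4; 3], [:: 4; 3; 4]);
  (0, [:: 2; 4], [:: 4; 2])]);
  ([:: 2; 3; 4], 4, [:: (2, [:: 4; 4], [::])]);
  ([:: 2; 3; 4], 5, [::]);
  ([:: 2; 3; 5], 2, [:: (2, [:: 5; 2], [:: 2; 5]);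
  (0, [:: 2; 3; 2], [:: 3; 2; 3])]);
  ([:: 2; 3; 5], 3, [:: (1, [:: 3; 5; 3], [:: 5; 3; 5]);
  (0, [:: 2; 5], [:: 5; 2])]);
  ([:: 2; 3; 5], 4, [:: (2, [:: 5; 4], [:: 4; 5])]);
  ([:: 2; 3; 5], 5, [:: (2, [:: 5; 5], [::])]);
  ([:: 2; 3; 4; 5], 2, [:: (3, [:: 5; 2], [:: 2; 5]);
  (2, [:: 4; 2], [:: 2; 4]);
  (0, [:: 2; 3; 2], [:: 3; 2; 3])]);
  ([:: 2; 3; 4; 5], 3, [::]);
  ([:: 2; 3; 4; 5], 4, [:: (2, [:: 4; 5], [:: 5; 4]);
  (3, [:: 4; 4], [::])]);
  ([:: 2; 3; 4; 5], 5, [:: (3, [:: 5; 5], [::])]);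
  ([:: 2; 3; 4; 5; 3], 2, [::]);
  ([:: 2; 3; 4; 5; 3], 3, [:: (4, [:: 3; 3], [::])]);
  ([:: 2; 3; 4; 5; 3], 4, [:: (2, [:: 4; 5], [:: 5; 4]);
  (3, [:: 4; 3; 4], [:: 3; 4; 3]);
  (1, [:: 3; 5; 3], [:: 5; 3; 5]);
  (0, [:: 2; 5], [:: 5; 2]);
  (3, [:: 5; 4], [:: 4; 5])]);
  ([:: 2; 3; 4; 5; 3], 5, [:: (3, [:: 5; 3; 5], [:: 3; 5; 3]);
  (1, [:: 3; 4; 3], [:: 4; 3; 4]);
  (0, [:: 2; 4], [:: 4; 2])]);
  ([:: 2; 3; 4; 5; 3; 2], 2, [:: (5, [:: 2; 2], [::])]);
  ([:: 2; 3; 4; 5; 3; 2], 3, [:: (4, [:: 3; 2; 3], [:: 2; 3; 2]);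
  (3, [:: 5; 2], [:: 2; 5]);
  (2, [:: 4; 2], [:: 2; 4]);
  (0, [:: 2; 3; 2], [:: 3; 2; 3])]);
  ([:: 2; 3; 4; 5; 3; 2], 4, [:: (2, [:: 4; 5], [:: 5; 4]);
  (5, [:: 2; 4], [:: 4; 2]);
  (3, [:: 4; 3; 4], [:: 3; 4; 3]);
  (1, [:: 3; 5; 3], [:: 5; 3; 5]);
  (0, [:: 2; 5], [:: 5; 2]);
  (3, [:: 5; 4], [:: 4; 5])]);
  ([:: 2; 3; 4; 5; 3; 2], 5, [:: (5, [:: 2; 5], [:: 5; 2]);
  (3, [:: 5; 3; 5], [:: 3; 5; 3]);
  (1, [:: 3; 4; 3], [:: 4; 3; 4]);
  (0, [:: 2; 4], [:: 4; 2])])]);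
 ([:: 1; 2; 3; 4; 5], [:: [::];
  [:: 1];
  [:: 1; 2];
  [:: 1; 2; 3];
  [:: 1; 2; 3; 4];
  [:: 1; 2; 3; 5];
  [:: 1; 2; 3; 4; 5];
  [:: 1; 2; 3; 4; 5; 3];
  [:: 1; 2; 3; 4; 5; 3; 2];
  [:: 1; 2; 3; 4; 5; 3; 2; 1]],
 [:: ([::], 1, [::]);
  ([::], 2, [::]);
  ([::], 3, [::]);
  ([::], 4, [::]);
  ([::], 5, [::]);
  ([:: 1], 1, [:: (0, [:: 1; 1], [::])]);
  ([:: 1], 2, [::]);
  ([:: 1], 3, [:: (0, [:: 1; 3], [:: 3; 1])]);
  ([:: 1], 4, [:: (0, [:: 1; 4], [:: 4; 1])]);
  ([:: 1], 5, [:: (0, [:: 1; 5], [:: 5; 1])]);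
  ([:: 1; 2], 1, [:: (0, [:: 1; 2; 1], [:: 2; 1; 2])]);
  ([:: 1; 2], 2, [:: (1, [:: 2; 2], [::])]);
  ([:: 1; 2], 3, [::]);
  ([:: 1; 2], 4, [:: (1, [:: 2; 4], [:: 4; 2]);
  (0, [:: 1; 4], [:: 4; 1])]);
  ([:: 1; 2], 5, [:: (1, [:: 2; 5], [:: 5; 2]);
  (0, [:: 1; 5], [:: 5; 1])]);
  ([:: 1; 2; 3], 1, [:: (2, [:: 3; 1], [:: 1; 3]);
  (0, [:: 1; 2; 1], [:: 2; 1; 2])]);
  ([:: 1; 2; 3], 2, [:: (1, [:: 2; 3; 2], [:: 3; 2; 3]);
  (0, [:: 1; 3], [:: 3; 1])]);
  ([:: 1; 2; 3], 3, [:: (2, [:: 3; 3], [::])]);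
  ([:: 1; 2; 3], 4, [::]);
  ([:: 1; 2; 3], 5, [::]);
  ([:: 1; 2; 3; 4], 1, [:: (3, [:: 4; 1], [:: 1; 4]);
  (2, [:: 3; 1], [:: 1; 3]);
  (0, [:: 1; 2; 1], [:: 2; 1; 2])]);
  ([:: 1; 2; 3; 4], 2, [:: (3, [:: 4; 2], [:: 2; 4]);
  (1, [:: 2; 3; 2], [:: 3; 2; 3]);
  (0, [:: 1; 3], [:: 3; 1])]);
  ([:: 1; 2; 3; 4], 3, [:: (2, [:: 3; 4; 3], [:: 4; 3; 4]);
  (1, [:: 2; 4], [:: 4; 2]);
  (0, [:: 1; 4], [:: 4; 1])]);
  ([:: 1; 2; 3; 4], 4, [:: (3, [:: 4; 4], [::])]);
  ([:: 1; 2; 3; 4], 5, [::]);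
  ([:: 1; 2; 3; 5], 1, [:: (3, [:: 5; 1], [:: 1; 5]);
  (2, [:: 3; 1], [:: 1; 3]);
  (0, [:: 1; 2; 1], [:: 2; 1; 2])]);
  ([:: 1; 2; 3; 5], 2, [:: (3, [:: 5; 2], [:: 2; 5]);
  (1, [:: 2; 3; 2], [:: 3; 2; 3]);
  (0, [:: 1; 3], [:: 3; 1])]);
  ([:: 1; 2; 3; 5], 3, [:: (2, [:: 3; 5; 3], [:: 5; 3; 5]);
  (1, [:: 2; 5], [:: 5; 2]);
  (0, [:: 1; 5], [:: 5; 1])]);
  ([:: 1; 2; 3; 5], 4, [:: (3, [:: 5; 4], [:: 4; 5])]);
  ([:: 1; 2; 3; 5], 5, [:: (3, [:: 5; 5], [::])]);
  ([:: 1; 2; 3; 4; 5], 1, [:: (4, [:: 5; 1], [:: 1; 5]);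
  (3, [:: 4; 1], [:: 1; 4]);
  (2, [:: 3; 1], [:: 1; 3]);
  (0, [:: 1; 2; 1], [:: 2; 1; 2])]);
  ([:: 1; 2; 3; 4; 5], 2, [:: (4, [:: 5; 2], [:: 2; 5]);
  (3, [:: 4; 2], [:: 2; 4]);
  (1, [:: 2; 3; 2], [:: 3; 2; 3]);
  (0, [:: 1; 3], [:: 3; 1])]);
  ([:: 1; 2; 3; 4; 5], 3, [::]);
  ([:: 1; 2; 3; 4; 5], 4, [:: (3, [:: 4; 5], [:: 5; 4]);
  (4, [:: 4; 4], [::])]);
  ([:: 1; 2; 3; 4; 5], 5, [:: (4, [:: 5; 5], [::])]);
  ([:: 1; 2; 3; 4; 5; 3], 1, [:: (5, [:: 3; 1], [:: 1; 3]);
  (4, [:: 5; 1], [:: 1; 5]);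
  (3, [:: 4; 1], [:: 1; 4]);
  (2, [:: 3; 1], [:: 1; 3]);
  (0, [:: 1; 2; 1], [:: 2; 1; 2])]);
  ([:: 1; 2; 3; 4; 5; 3], 2, [::]);
  ([:: 1; 2; 3; 4; 5; 3], 3, [:: (5, [:: 3; 3], [::])]);
  ([:: 1; 2; 3; 4; 5; 3], 4, [:: (3, [:: 4; 5], [:: 5; 4]);
  (4, [:: 4; 3; 4], [:: 3; 4; 3]);
  (2, [:: 3; 5; 3], [:: 5; 3; 5]);
  (1, [:: 2; 5], [:: 5; 2]);
  (0, [:: 1; 5], [:: 5; 1]);
  (4, [:: 5; 4], [:: 4; 5])]);
  ([:: 1; 2; 3; 4; 5; 3], 5, [:: (4, [:: 5; 3; 5], [:: 3; 5; 3]);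
  (2, [:: 3; 4; 3], [:: 4; 3; 4]);
  (1, [:: 2; 4], [:: 4; 2]);
  (0, [:: 1; 4], [:: 4; 1])]);
  ([:: 1; 2; 3; 4; 5; 3; 2], 1, [::]);
  ([:: 1; 2; 3; 4; 5; 3; 2], 2, [:: (6, [:: 2; 2], [::])]);
  ([:: 1; 2; 3; 4; 5; 3; 2], 3, [:: (5, [:: 3; 2; 3], [:: 2; 3; 2]);
  (4, [:: 5; 2], [:: 2; 5]);
  (3, [:: 4; 2], [:: 2; 4]);
  (1, [:: 2; 3; 2], [:: 3; 2; 3]);
  (0, [:: 1; 3], [:: 3; 1])]);
  ([:: 1; 2; 3; 4; 5; 3; 2], 4, [:: (3, [:: 4; 5], [:: 5; 4]);
  (6, [:: 2; 4], [:: 4; 2]);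
  (4, [:: 4; 3; 4], [:: 3; 4; 3]);
  (2, [:: 3; 5; 3], [:: 5; 3; 5]);
  (1, [:: 2; 5], [:: 5; 2]);
  (0, [:: 1; 5], [:: 5; 1]);
  (4, [:: 5; 4], [:: 4; 5])]);
  ([:: 1; 2; 3; 4; 5; 3; 2], 5, [:: (6, [:: 2; 5], [:: 5; 2]);
  (4, [:: 5; 3; 5], [:: 3; 5; 3]);
  (2, [:: 3; 4; 3], [:: 4; 3; 4]);
  (1, [:: 2; 4], [:: 4; 2]);
  (0, [:: 1; 4], [:: 4; 1])]);
  ([:: 1; 2; 3; 4; 5; 3; 2; 1], 1, [:: (7, [:: 1; 1], [::])]);
  ([:: 1; 2; 3; 4; 5; 3; 2; 1], 2, [:: (6, [:: 2; 1; 2], [:: 1; 2; 1]);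
  (5, [:: 3; 1], [:: 1; 3]);
  (4, [:: 5; 1], [:: 1; 5]);
  (3, [:: 4; 1], [:: 1; 4]);
  (2, [:: 3; 1], [:: 1; 3]);
  (0, [:: 1; 2; 1], [:: 2; 1; 2])]);
  ([:: 1; 2; 3; 4; 5; 3; 2; 1], 3, [:: (7, [:: 1; 3], [:: 3; 1]);
  (5, [:: 3; 2; 3], [:: 2; 3; 2]);
  (4, [:: 5; 2], [:: 2; 5]);
  (3, [:: 4; 2], [:: 2; 4]);
  (1, [:: 2; 3; 2], [:: 3; 2; 3]);
  (0, [:: 1; 3], [:: 3; 1])]);
  ([:: 1; 2; 3; 4; 5; 3; 2; 1], 4, [:: (3, [:: 4; 5], [:: 5; 4]);
  (7, [:: 1; 4], [:: 4; 1]);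
  (6, [:: 2; 4], [:: 4; 2]);
  (4, [:: 4; 3; 4], [:: 3; 4; 3]);
  (2, [:: 3; 5; 3], [:: 5; 3; 5]);
  (1, [:: 2; 5], [:: 5; 2]);
  (0, [:: 1; 5], [:: 5; 1]);
  (4, [:: 5; 4], [:: 4; 5])]);
  ([:: 1; 2; 3; 4; 5; 3; 2; 1], 5, [:: (7, [:: 1; 5], [:: 5; 1]);
  (6, [:: 2; 5], [:: 5; 2]);
  (4, [:: 5; 3; 5], [:: 3; 5; 3]);
  (2, [:: 3; 4; 3], [:: 4; 3; 4]);
  (1, [:: 2; 4], [:: 4; 2]);
  (0, [:: 1; 4], [:: 4; 1])])]);
 ([:: 0; 1; 2; 3; 4; 5], [:: [::];
  [:: 0];
  [:: 0; 1];
  [:: 0; 1; 2];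
  [:: 0; 1; 2; 3];
  [:: 0; 1; 2; 3; 4];
  [:: 0; 1; 2; 3; 5];
  [:: 0; 1; 2; 3; 4; 5];
  [:: 0; 1; 2; 3; 4; 5; 3];
  [:: 0; 1; 2; 3; 4; 5; 3; 2];
  [:: 0; 1; 2; 3; 4; 5; 3; 2; 1];
  [:: 0; 1; 2; 3; 4; 5; 3; 2; 1; 0]],
 [:: ([::], 0, [::]);
  ([::], 1, [::]);
  ([::], 2, [::]);
  ([::], 3, [::]);
  ([::], 4, [::]);
  ([::], 5, [::]);
  ([:: 0], 0, [:: (0, [:: 0; 0], [::])]);
  ([:: 0], 1, [::]);
  ([:: 0], 2, [:: (0, [:: 0; 2], [:: 2; 0])]);
  ([:: 0], 3, [:: (0, [:: 0; 3], [:: 3; 0])]);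
  ([:: 0], 4, [:: (0, [:: 0; 4], [:: 4; 0])]);
  ([:: 0], 5, [:: (0, [:: 0; 5], [:: 5; 0])]);
  ([:: 0; 1], 0, [:: (0, [:: 0; 1; 0], [:: 1; 0; 1])]);
  ([:: 0; 1], 1, [:: (1, [:: 1; 1], [::])]);
  ([:: 0; 1], 2, [::]);
  ([:: 0; 1], 3, [:: (1, [:: 1; 3], [:: 3; 1]);
  (0, [:: 0; 3], [:: 3; 0])]);
  ([:: 0; 1], 4, [:: (1, [:: 1; 4], [:: 4; 1]);
  (0, [:: 0; 4], [:: 4; 0])]);
  ([:: 0; 1], 5, [:: (1, [:: 1; 5], [:: 5; 1]);
  (0, [:: 0; 5], [:: 5; 0])]);
  ([:: 0; 1; 2], 0, [:: (2, [:: 2; 0], [:: 0; 2]);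
  (0, [:: 0; 1; 0], [:: 1; 0; 1])]);
  ([:: 0; 1; 2], 1, [:: (1, [:: 1; 2; 1], [:: 2; 1; 2]);
  (0, [:: 0; 2], [:: 2; 0])]);
  ([:: 0; 1; 2], 2, [:: (2, [:: 2; 2], [::])]);
  ([:: 0; 1; 2], 3, [::]);
  ([:: 0; 1; 2], 4, [:: (2, [:: 2; 4], [:: 4; 2]);
  (1, [:: 1; 4], [:: 4; 1]);
  (0, [:: 0; 4], [:: 4; 0])]);
  ([:: 0; 1; 2], 5, [:: (2, [:: 2; 5], [:: 5; 2]);
  (1, [:: 1; 5], [:: 5; 1]);
  (0, [:: 0; 5], [:: 5; 0])]);
  ([:: 0; 1; 2; 3], 0, [:: (3, [:: 3; 0], [:: 0; 3]);
  (2, [:: 2; 0], [:: 0; 2]);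
  (0, [:: 0; 1; 0], [:: 1; 0; 1])]);
  ([:: 0; 1; 2; 3], 1, [:: (3, [:: 3; 1], [:: 1; 3]);
  (1, [:: 1; 2; 1], [:: 2; 1; 2]);
  (0, [:: 0; 2], [:: 2; 0])]);
  ([:: 0; 1; 2; 3], 2, [:: (2, [:: 2; 3; 2], [:: 3; 2; 3]);
  (1, [:: 1; 3], [:: 3; 1]);
  (0, [:: 0; 3], [:: 3; 0])]);
  ([:: 0; 1; 2; 3], 3, [:: (3, [:: 3; 3], [::])]);
  ([:: 0; 1; 2; 3], 4, [::]);
  ([:: 0; 1; 2; 3], 5, [::]);
  ([:: 0; 1; 2; 3; 4], 0, [:: (4, [:: 4; 0], [:: 0; 4]);
  (3, [:: 3; 0], [:: 0; 3]);
  (2, [:: 2; 0], [:: 0; 2]);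
  (0, [:: 0; 1; 0], [:: 1; 0; 1])]);
  ([:: 0; 1; 2; 3; 4], 1, [:: (4, [:: 4; 1], [:: 1; 4]);
  (3, [:: 3; 1], [:: 1; 3]);
  (1, [:: 1; 2; 1], [:: 2; 1; 2]);
  (0, [:: 0; 2], [:: 2; 0])]);
  ([:: 0; 1; 2; 3; 4], 2, [:: (4, [:: 4; 2], [:: 2; 4]);
  (2, [:: 2; 3; 2], [:: 3; 2; 3]);
  (1, [:: 1; 3], [:: 3; 1]);
  (0, [:: 0; 3], [:: 3; 0])]);
  ([:: 0; 1; 2; 3; 4], 3, [:: (3, [:: 3; 4; 3], [:: 4; 3; 4]);
  (2, [:: 2; 4], [:: 4; 2]);
  (1, [:: 1; 4], [:: 4; 1]);
  (0, [:: 0; 4], [:: 4; 0])]);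
  ([:: 0; 1; 2; 3; 4], 4, [:: (4, [:: 4; 4], [::])]);
  ([:: 0; 1; 2; 3; 4], 5, [::]);
  ([:: 0; 1; 2; 3; 5], 0, [:: (4, [:: 5; 0], [:: 0; 5]);
  (3, [:: 3; 0], [:: 0; 3]);
  (2, [:: 2; 0], [:: 0; 2]);
  (0, [:: 0; 1; 0], [:: 1; 0; 1])]);
  ([:: 0; 1; 2; 3; 5], 1, [:: (4, [:: 5; 1], [:: 1; 5]);
  (3, [:: 3; 1], [:: 1; 3]);
  (1, [:: 1; 2; 1], [:: 2; 1; 2]);
  (0, [:: 0; 2], [:: 2; 0])]);
  ([:: 0; 1; 2; 3; 5], 2, [:: (4, [:: 5; 2], [:: 2; 5]);
  (2, [:: 2; 3; 2], [:: 3; 2; 3]);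
  (1, [:: 1; 3], [:: 3; 1]);
  (0, [:: 0; 3], [:: 3; 0])]);
  ([:: 0; 1; 2; 3; 5], 3, [:: (3, [:: 3; 5; 3], [:: 5; 3; 5]);
  (2, [:: 2; 5], [:: 5; 2]);
  (1, [:: 1; 5], [:: 5; 1]);
  (0, [:: 0; 5], [:: 5; 0])]);
  ([:: 0; 1; 2; 3; 5], 4, [:: (4, [:: 5; 4], [:: 4; 5])]);
  ([:: 0; 1; 2; 3; 5], 5, [:: (4, [:: 5; 5], [::])]);
  ([:: 0; 1; 2; 3; 4; 5], 0, [:: (5, [:: 5; 0], [:: 0; 5]);
  (4, [:: 4; 0], [:: 0; 4]);
  (3, [:: 3; 0], [:: 0; 3]);
  (2, [:: 2; 0], [:: 0; 2]);
  (0, [:: 0; 1; 0], [:: 1; 0; 1])]);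
  ([:: 0; 1; 2; 3; 4; 5], 1, [:: (5, [:: 5; 1], [:: 1; 5]);
  (4, [:: 4; 1], [:: 1; 4]);
  (3, [:: 3; 1], [:: 1; 3]);
  (1, [:: 1; 2; 1], [:: 2; 1; 2]);
  (0, [:: 0; 2], [:: 2; 0])]);
  ([:: 0; 1; 2; 3; 4; 5], 2, [:: (5, [:: 5; 2], [:: 2; 5]);
  (4, [:: 4; 2], [:: 2; 4]);
  (2, [:: 2; 3; 2], [:: 3; 2; 3]);
  (1, [:: 1; 3], [:: 3; 1]);
  (0, [:: 0; 3], [:: 3; 0])]);
  ([:: 0; 1; 2; 3; 4; 5], 3, [::]);
  ([:: 0; 1; 2; 3; 4; 5], 4, [:: (4, [:: 4; 5], [:: 5; 4]);
  (5, [:: 4; 4], [::])]);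
  ([:: 0; 1; 2; 3; 4; 5], 5, [:: (5, [:: 5; 5], [::])]);
  ([:: 0; 1; 2; 3; 4; 5; 3], 0, [:: (6, [:: 3; 0], [:: 0; 3]);
  (5, [:: 5; 0], [:: 0; 5]);
  (4, [:: 4; 0], [:: 0; 4]);
  (3, [:: 3; 0], [:: 0; 3]);
  (2, [:: 2; 0], [:: 0; 2]);
  (0, [:: 0; 1; 0], [:: 1; 0; 1])]);
  ([:: 0; 1; 2; 3; 4; 5; 3], 1, [:: (6, [:: 3; 1], [:: 1; 3]);
  (5, [:: 5; 1], [:: 1; 5]);
  (4, [:: 4; 1], [:: 1; 4]);
  (3, [:: 3; 1], [:: 1; 3]);
  (1, [:: 1; 2; 1], [:: 2; 1; 2]);
  (0, [:: 0; 2], [:: 2; 0])]);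
  ([:: 0; 1; 2; 3; 4; 5; 3], 2, [::]);
  ([:: 0; 1; 2; 3; 4; 5; 3], 3, [:: (6, [:: 3; 3], [::])]);
  ([:: 0; 1; 2; 3; 4; 5; 3], 4, [:: (4, [:: 4; 5], [:: 5; 4]);
  (5, [:: 4; 3; 4], [:: 3; 4; 3]);
  (3, [:: 3; 5; 3], [:: 5; 3; 5]);
  (2, [:: 2; 5], [:: 5; 2]);
  (1, [:: 1; 5], [:: 5; 1]);
  (0, [:: 0; 5], [:: 5; 0]);
  (5, [:: 5; 4], [:: 4; 5])]);
  ([:: 0; 1; 2; 3; 4; 5; 3], 5, [:: (5, [:: 5; 3; 5], [:: 3; 5; 3]);
  (3, [:: 3; 4; 3], [:: 4; 3; 4]);
  (2, [:: 2; 4], [:: 4; 2]);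
  (1, [:: 1; 4], [:: 4; 1]);
  (0, [:: 0; 4], [:: 4; 0])]);
  ([:: 0; 1; 2; 3; 4; 5; 3; 2], 0, [:: (7, [:: 2; 0], [:: 0; 2]);
  (6, [:: 3; 0], [:: 0; 3]);
  (5, [:: 5; 0], [:: 0; 5]);
  (4, [:: 4; 0], [:: 0; 4]);
  (3, [:: 3; 0], [:: 0; 3]);
  (2, [:: 2; 0], [:: 0; 2]);
  (0, [:: 0; 1; 0], [:: 1; 0; 1])]);
  ([:: 0; 1; 2; 3; 4; 5; 3; 2], 1, [::]);
  ([:: 0; 1; 2; 3; 4; 5; 3; 2], 2, [:: (7, [:: 2; 2], [::])]);
  ([:: 0; 1; 2; 3; 4; 5; 3; 2], 3, [:: (6, [:: 3; 2; 3], [:: 2; 3; 2]);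
  (5, [:: 5; 2], [:: 2; 5]);
  (4, [:: 4; 2], [:: 2; 4]);
  (2, [:: 2; 3; 2], [:: 3; 2; 3]);
  (1, [:: 1; 3], [:: 3; 1]);
  (0, [:: 0; 3], [:: 3; 0])]);
  ([:: 0; 1; 2; 3; 4; 5; 3; 2], 4, [:: (4, [:: 4; 5], [:: 5; 4]);
  (7, [:: 2; 4], [:: 4; 2]);
  (5, [:: 4; 3; 4], [:: 3; 4; 3]);
  (3, [:: 3; 5; 3], [:: 5; 3; 5]);
  (2, [:: 2; 5], [:: 5; 2]);
  (1, [:: 1; 5], [:: 5; 1]);
  (0, [:: 0; 5], [:: 5; 0]);
  (5, [:: 5; 4], [:: 4; 5])]);
  ([:: 0; 1; 2; 3; 4; 5; 3; 2], 5, [:: (7, [:: 2; 5], [:: 5; 2]);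
  (5, [:: 5; 3; 5], [:: 3; 5; 3]);
  (3, [:: 3; 4; 3], [:: 4; 3; 4]);
  (2, [:: 2; 4], [:: 4; 2]);
  (1, [:: 1; 4], [:: 4; 1]);
  (0, [:: 0; 4], [:: 4; 0])]);
  ([:: 0; 1; 2; 3; 4; 5; 3; 2; 1], 0, [::]);
  ([:: 0; 1; 2; 3; 4; 5; 3; 2; 1], 1, [:: (8, [:: 1; 1], [::])]);
  ([:: 0; 1; 2; 3; 4; 5; 3; 2; 1], 2, [:: (7, [:: 2; 1; 2], [:: 1; 2; 1]);
  (6, [:: 3; 1], [:: 1; 3]);
  (5, [:: 5; 1], [:: 1; 5]);
  (4, [:: 4; 1], [:: 1; 4]);
  (3, [:: 3; 1], [:: 1; 3]);
  (1, [:: 1; 2; 1], [:: 2; 1; 2]);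
  (0, [:: 0; 2], [:: 2; 0])]);
  ([:: 0; 1; 2; 3; 4; 5; 3; 2; 1], 3, [:: (8, [:: 1; 3], [:: 3; 1]);
  (6, [:: 3; 2; 3], [:: 2; 3; 2]);
  (5, [:: 5; 2], [:: 2; 5]);
  (4, [:: 4; 2], [:: 2; 4]);
  (2, [:: 2; 3; 2], [:: 3; 2; 3]);
  (1, [:: 1; 3], [:: 3; 1]);
  (0, [:: 0; 3], [:: 3; 0])]);
  ([:: 0; 1; 2; 3; 4; 5; 3; 2; 1], 4, [:: (4, [:: 4; 5], [:: 5; 4]);
  (8, [:: 1; 4], [:: 4; 1]);
  (7, [:: 2; 4], [:: 4; 2]);
  (5, [:: 4; 3; 4], [:: 3; 4; 3]);
  (3, [:: 3; 5; 3], [:: 5; 3; 5]);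
  (2, [:: 2; 5], [:: 5; 2]);
  (1, [:: 1; 5], [:: 5; 1]);
  (0, [:: 0; 5], [:: 5; 0]);
  (5, [:: 5; 4], [:: 4; 5])]);
  ([:: 0; 1; 2; 3; 4; 5; 3; 2; 1], 5, [:: (8, [:: 1; 5], [:: 5; 1]);
  (7, [:: 2; 5], [:: 5; 2]);
  (5, [:: 5; 3; 5], [:: 3; 5; 3]);
  (3, [:: 3; 4; 3], [:: 4; 3; 4]);
  (2, [:: 2; 4], [:: 4; 2]);
  (1, [:: 1; 4], [:: 4; 1]);
  (0, [:: 0; 4], [:: 4; 0])]);
  ([:: 0; 1; 2; 3; 4; 5; 3; 2; 1; 0], 0, [:: (9, [:: 0; 0], [::])]);
  ([:: 0; 1; 2; 3; 4; 5; 3; 2; 1; 0], 1, [:: (8, [:: 1; 0; 1], [:: 0; 1; 0]);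
  (7, [:: 2; 0], [:: 0; 2]);
  (6, [:: 3; 0], [:: 0; 3]);
  (5, [:: 5; 0], [:: 0; 5]);
  (4, [:: 4; 0], [:: 0; 4]);
  (3, [:: 3; 0], [:: 0; 3]);
  (2, [:: 2; 0], [:: 0; 2]);
  (0, [:: 0; 1; 0], [:: 1; 0; 1])]);
  ([:: 0; 1; 2; 3; 4; 5; 3; 2; 1; 0], 2, [:: (9, [:: 0; 2], [:: 2; 0]);
  (7, [:: 2; 1; 2], [:: 1; 2; 1]);
  (6, [:: 3; 1], [:: 1; 3]);
  (5, [:: 5; 1], [:: 1; 5]);
  (4, [:: 4; 1], [:: 1; 4]);
  (3, [:: 3; 1], [:: 1; 3]);
  (1, [:: 1; 2; 1], [:: 2; 1; 2]);
  (0, [:: 0; 2], [:: 2; 0])]);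
  ([:: 0; 1; 2; 3; 4; 5; 3; 2; 1; 0], 3, [:: (9, [:: 0; 3], [:: 3; 0]);
  (8, [:: 1; 3], [:: 3; 1]);
  (6, [:: 3; 2; 3], [:: 2; 3; 2]);
  (5, [:: 5; 2], [:: 2; 5]);
  (4, [:: 4; 2], [:: 2; 4]);
  (2, [:: 2; 3; 2], [:: 3; 2; 3]);
  (1, [:: 1; 3], [:: 3; 1]);
  (0, [:: 0; 3], [:: 3; 0])]);
  ([:: 0; 1; 2; 3; 4; 5; 3; 2; 1; 0], 4, [:: (4, [:: 4; 5], [:: 5; 4]);
  (9, [:: 0; 4], [:: 4; 0]);
  (8, [:: 1; 4], [:: 4; 1]);
  (7, [:: 2; 4], [:: 4; 2]);
  (5, [:: 4; 3; 4], [:: 3; 4; 3]);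
  (3, [:: 3; 5; 3], [:: 5; 3; 5]);
  (2, [:: 2; 5], [:: 5; 2]);
  (1, [:: 1; 5], [:: 5; 1]);
  (0, [:: 0; 5], [:: 5; 0]);
  (5, [:: 5; 4], [:: 4; 5])]);
  ([:: 0; 1; 2; 3; 4; 5; 3; 2; 1; 0], 5, [:: (9, [:: 0; 5], [:: 5; 0]);
  (8, [:: 1; 5], [:: 5; 1]);
  (7, [:: 2; 5], [:: 5; 2]);
  (5, [:: 5; 3; 5], [:: 3; 5; 3]);
  (3, [:: 3; 4; 3], [:: 4; 3; 4]);
  (2, [:: 2; 4], [:: 4; 2]);
  (1, [:: 1; 4], [:: 4; 1]);
  (0, [:: 0; 4], [:: 4; 0])])])].

Definition Mall : seq (seq (seq int)) := Mrows ++ [:: A_rows].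

Definition app (ts : seq (seq nat)) (w : seq nat) (i : nat) : nat :=
  foldl (fun j k => nth 0%N (nth [::] ts k) j) i w.

Definition vml (v : seq int) (M : seq (seq int)) : seq int :=
  mkseq (fun j => foldr (fun k acc => nth 0%Z v k * nth 0%Z (nth [::] M k) j + acc) 0%Z (iota 0 7)) 7.

Definition C1 : bool :=
  all (fun k => all (fun t => vml (nth [::] Tl t) (nth [::] Mall k) == nth [::] Tl (nth 0%N (nth [::] ptbls k) t)) (iota 0 92)) (iota 0 6).
Lemma C1_ok : C1. Proof. vm_compute. reflexivity. Qed.

End Data_.
Import Data_.

Module Cox_.

Definition adjb (i j : nat) : bool :=
  [|| (i == 0) && (j == 1), (i == 1) && (j == 2), (i == 2) && (j == 3),
      (i == 3) && (j == 4) | (i == 3) && (j == 5)]%N.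
Definition mm (i j : nat) : nat :=
  if i == j then 1 else if adjb i j || adjb j i then 3 else 2.

Definition rule_ok (l r : seq nat) : bool :=
  match l, r with
  | [:: a; b], [::] => (a == b) && (a < 6)
  | [::], [:: a; b] => (a == b) && (a < 6)
  | [:: a; b], [:: c; d] => [&& a == d, b == c, a < 6, b < 6 & mm a b == 2]
  | [:: a; b; c], [:: d; f; g] =>
      [&& a == c, d == g, a == f, b == d, a < 6, b < 6 & mm a b == 3]
  | _, _ => false
  end.

Definition step := (nat * seq nat * seq nat)%type.

Definition apply_step (w : seq nat) (st : step) : option (seq nat) :=
  let: (p, l, r) := st in
  if rule_ok l r && (take (size l) (drop p w) == l)
  then Some (take p w ++ r ++ drop (p + size l) w) else None.

Definition apply_steps (w : seq nat) (sts : seq step) : option (seq nat) :=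
  foldl (fun ow st => if ow is Some w then apply_step w st else None) (Some w) sts.

Definition check_cert (Jp : seq nat) (Rk : seq (seq nat)) (w : seq nat) (sts : seq step) :=
  if apply_steps w sts is Some f then
    has (fun n => all (fun c => c \in Jp) (take n f) && (drop n f \in Rk)) (iota 0 (size f).+1)
  else false.

Definition check_level (Jp Jk : seq nat) (Rk : seq (seq nat)) (Ck : seq (seq nat * nat * seq step)) :=
  ([::] \in Rk) &&
  all (fun r => all (fun s => has (fun c => let: (r0, s0, sts) := c in
     [&& r0 == r, s0 == s & check_cert Jp Rk (r ++ [:: s]) sts]) Ck) Jk) Rk.

Fixpoint check_chain (Jp : seq nat) (L : seq (seq nat * seq (seq nat) * seq (seq nat * nat * seq step))) :=
  if L is (Jk, Rk, Ck) :: L' then check_level Jp Jk Rk Ck && check_chain Jk L' else true.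

Fixpoint chainAW (AW : seq (seq nat)) (L : seq (seq nat * seq (seq nat) * seq (seq nat * nat * seq step))) :=
  if L is (Jk, Rk, Ck) :: L' then chainAW [seq a ++ r | a <- AW, r <- Rk] L' else AW.

Fixpoint chainJ (Jp : seq nat) (L : seq (seq nat * seq (seq nat) * seq (seq nat * nat * seq step))) :=
  if L is (Jk, Rk, Ck) :: L' then chainJ Jk L' else Jp.

Section Cox.
Local Open Scope group_scope.
Variables (G : finGroupType) (e : nat -> G).
Hypothesis He : forall i j, (i < 6)%N -> (j < 6)%N -> (e i * e j) ^+ mm i j = 1.

Definition ev (w : seq nat) : G := foldr (fun i x => e i * x) 1 w.

Lemma ev_cat a b : ev (a ++ b) = ev a * ev b.
Proof. by elim: a => [|i a IH] /=; rewrite ?mul1g // IH mulgA. Qed.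

Lemma e_sq i : (i < 6)%N -> e i * e i = 1.
Proof. by move=> Hi; have := He Hi Hi; rewrite /mm eqxx expg1. Qed.

Lemma e_inv i : (i < 6)%N -> (e i)^-1 = e i.
Proof. by move=> Hi; apply/eqP; rewrite eq_invg_mul e_sq. Qed.

Lemma e_comm i j : (i < 6)%N -> (j < 6)%N -> mm i j = 2 -> e i * e j = e j * e i.
Proof.
move=> Hi Hj Hm; have H : e i * e j * (e i * e j) = 1 by rewrite -expg2 -Hm He.
have: (e i * e j)^-1 = e i * e j by apply/eqP; rewrite eq_invg_mul H.
by rewrite invMg !e_inv // => <-.
Qed.

Lemma e_braid i j : (i < 6)%N -> (j < 6)%N -> mm i j = 3 ->
  e i * e j * e i = e j * e i * e j.
Proof.
move=> Hi Hj Hm; have H : e i * e j * (e i * e j) * (e i * e j) = 1.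
  by rewrite -expg2 -expgSr -Hm He.
have H2: (e i * e j) * (e i * e j) = e j * e i.
  have: (e i * e j)^-1 = (e i * e j) * (e i * e j).
    by apply/eqP; rewrite eq_invg_mul mulgA H.
  by rewrite invMg !e_inv.
have := congr1 (fun x => x * e j) H2.
by rewrite !mulgA -(mulgA _ (e j) (e j)) e_sq // mulg1.
Qed.

Lemma rule_sound l r : rule_ok l r -> ev l = ev r.
Proof.
case: l => [|a [|b [|c [|? ?]]]]; case: r => [|d [|f [|g [|? ?]]]] //=.
- by case/andP=> /eqP <- H; rewrite mulg1 e_sq.
- by case/andP=> /eqP <- H; rewrite mulg1 e_sq.
- by case/and5P=> /eqP -> /eqP -> Ha Hb /eqP Hm; rewrite !mulg1 e_comm.
- case/and5P=> /eqP <- /eqP <- /eqP <- /eqP <- /andP[Ha /andP[Hb /eqP Hm]].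
  by rewrite !mulg1 !mulgA e_braid.
Qed.

Lemma apply_step_sound w st w' : apply_step w st = Some w' -> ev w = ev w'.
Proof.
case: st => [[p l] r] /=; case: ifP => // /andP[Hr /eqP Ht] [<-].
rewrite -{1}(cat_take_drop p w) -{1}(cat_take_drop (size l) (drop p w)) Ht.
by rewrite drop_drop addnC !ev_cat (rule_sound Hr).
Qed.

Lemma apply_steps_sound w sts w' : apply_steps w sts = Some w' -> ev w = ev w'.
Proof.
rewrite /apply_steps; elim: sts w => [|st sts IH] w /=; first by case=> ->.
case E: (apply_step w st) => [w1|]; last by elim: sts {IH} => //.
by move/IH <-; apply: apply_step_sound E.
Qed.

Definition closedP (J : seq nat) (AW : seq (seq nat)) :=
  forall a, a \in AW -> forall u, all (fun c => c \in J) u ->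
    exists2 a', a' \in AW & ev a * ev u = ev a'.

Lemma level_ok Jp Jk Rk Ck AW : (forall s, s \in Jk -> s < 6)%N ->
  check_level Jp Jk Rk Ck -> closedP Jp AW ->
  closedP Jk [seq a ++ r | a <- AW, r <- Rk].
Proof.
move=> HJ /andP[R0 Hall] Hp x /allpairsP[[a0 r0] /= [Ha0 Hr0 ->]] u.
elim/last_ind: u => [|u s IH]; first by exists (a0 ++ r0); rewrite ?mulg1 //; apply/allpairsP; exists (a0, r0).
rewrite all_rcons => /andP[Hs Hu].
have [a1] := IH Hu; case/allpairsP=> [[a r] /= [Ha Hr ->]] Heq.
have := allP Hall r Hr; move/allP/(_ s Hs)/hasP=> [[[r1 s1] sts] _].
move=> /and3P[_ _]; rewrite /check_cert.
case Ea: (apply_steps _ _) => [f|] // /hasP[n _ /andP[Hn Hd]].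
have [a2 Ha2 Ea2] := Hp a Ha _ Hn.
exists (a2 ++ drop n f); first by apply/allpairsP; exists (a2, drop n f).
rewrite -cats1 (ev_cat u) mulgA Heq (ev_cat a) -mulgA.
have ->: ev r * ev [:: s] = ev (r ++ [:: s]) by rewrite ev_cat.
rewrite (apply_steps_sound Ea) -{1}(cat_take_drop n f) ev_cat mulgA Ea2.
by rewrite ev_cat.
Qed.

Lemma chain_ok (Jp : seq nat) (L : seq (seq nat * seq (seq nat) * seq (seq nat * nat * seq step))) (AW : seq (seq nat)) :
  (forall Jk : seq nat, Jk \in [seq x.1.1 | x <- L] -> forall s : nat, s \in Jk -> s < 6)%N ->
  check_chain Jp L -> closedP Jp AW -> closedP (chainJ Jp L) (chainAW AW L).
Proof.
elim: L Jp AW => [|[[Jk Rk] Ck] L IH] Jp AW //= HJ /andP[Hl Hc] Hp.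
apply: IH => //; first by move=> J HJ'; apply: HJ; rewrite inE HJ' orbT.
apply: level_ok Hl Hp; apply: HJ; exact: mem_head.
Qed.

End Cox.

End Cox_.
Import Cox_.

Module Bound_.

Definition AW6 := chainAW [:: [::]] levels.

Lemma chk_chain : check_chain [::] levels. Proof. vm_compute. reflexivity. Qed.
Lemma chk_J : chainJ [::] levels = [:: 0; 1; 2; 3; 4; 5]%N. Proof. vm_compute. reflexivity. Qed.
Lemma chk_Jb : all (fun J : seq nat => all (fun s => s < 6)%N J) [seq x.1.1 | x <- levels].
Proof. vm_compute. reflexivity. Qed.
Lemma chk_size : size AW6 = 23040%N. Proof. vm_compute. reflexivity. Qed.
Lemma chk_nil : [::] \in AW6. Proof. vm_compute. reflexivity. Qed.

Section Bound.
Local Open Scope group_scope.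
Variables (G : finGroupType) (e : nat -> G).
Hypothesis He : forall i j, (i < 6)%N -> (j < 6)%N -> (e i * e j) ^+ mm i j = 1.

Lemma closed6 : closedP e [:: 0; 1; 2; 3; 4; 5]%N AW6.
Proof.
rewrite -chk_J; apply: chain_ok => //.
- move=> Jk HJk s Hs; exact: (allP (allP chk_Jb Jk HJk) s Hs).
move=> a; rewrite inE => /eqP -> [|c u] //= _; exists [::]; rewrite ?inE ?mulg1 //.
Qed.

Lemma gens_word n (c : 'I_n -> G) :
  (forall i, c i \in [set e (val k) | k : 'I_6]) ->
  exists2 u : seq nat, all (fun c => c \in [:: 0; 1; 2; 3; 4; 5]%N) u & ev e u = \prod_i c i.
Proof.
elim: n c => [|n IH] c Hc; first by exists [::]; rewrite ?big_ord0.
have [u Hu Eu] := IH (fun i => c (lift ord0 i)) (fun i => Hc _).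
have /imsetP[k _ Ek] := Hc ord0.
exists (val k :: u); first by rewrite /= Hu andbT; case: k {Ek} => [[|[|[|[|[|[|]]]]]]].
by rewrite big_ord_recl /= Eu Ek.
Qed.

Lemma bound6 : #|<<[set e (val k) | k : 'I_6]>>| <= 23040.
Proof.
rewrite -chk_size -(size_map (ev e)).
apply: leq_trans (card_size _).
apply: subset_leq_card; apply/subsetP=> x /gen_prodgP[n [c Hc ->]].
have [u Hu <-] := gens_word Hc.
have [a' Ha' Ea] := closed6 chk_nil Hu.
by rewrite /= mul1g in Ea; rewrite Ea; apply/mapP; exists a'.
Qed.

End Bound.

End Bound_.
Import Bound_.

Module Perm_.
Local Open Scope group_scope.

Definition tbl_ok (t : seq nat) : bool :=
  [&& size t == 92, all (fun x => x < 92)%N t & uniq t].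

Definition tfun (t : seq nat) (i : 'I_92) : 'I_92 :=
  if tbl_ok t then inord (nth 0%N t i) else i.

Lemma tfun_inj t : injective (tfun t).
Proof.
rewrite /tfun; case Ht: (tbl_ok t); last by move=> i j.
case/and3P: Ht => /eqP Hs Hb Hu i j /(congr1 (@nat_of_ord _)).
have Hn k : (nth 0%N t k < 92)%N.
  case: (ltnP k 92) => Hk; first by apply: (allP Hb); apply: mem_nth; rewrite Hs.
  by rewrite nth_default ?Hs.
rewrite !inordK ?Hn // => /eqP; rewrite nth_uniq ?Hs // => /eqP; exact: val_inj.
Qed.

Definition mkp (t : seq nat) : {perm 'I_92} := perm (@tfun_inj t).

Lemma mkpE t i : tbl_ok t -> (mkp t i : nat) = nth 0%N t i.
Proof.
move=> H; rewrite permE /tfun H inordK //.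
case/and3P: H => /eqP Hs Hb _; apply: (allP Hb); apply: mem_nth; rewrite Hs.
exact: ltn_ord.
Qed.

Definition wP (ts : seq (seq nat)) (w : seq nat) : {perm 'I_92} :=
  foldr (fun k acc => mkp (nth [::] ts k) * acc) 1 w.

Lemma wP_app ts w (i : 'I_92) : all tbl_ok ts -> all (fun k => k < size ts)%N w ->
  (wP ts w i : nat) = app ts w i.
Proof.
move=> Hts; elim: w i => [|k w IH] i /=; first by rewrite perm1.
case/andP=> Hk Hw; rewrite permM IH // mkpE //; apply: (allP Hts); exact: mem_nth.
Qed.

Lemma wP_eq ts u v : all tbl_ok ts -> all (fun k => k < size ts)%N u ->
  all (fun k => k < size ts)%N v ->
  all (fun i => app ts u i == app ts v i) (iota 0 92) -> wP ts u = wP ts v.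
Proof.
move=> Hts Hu Hv H; apply/permP=> i; apply: ord_inj; rewrite !wP_app //.
by apply/eqP; apply: (allP H); rewrite mem_iota /= add0n ltn_ord.
Qed.

Lemma wP_eq2 ts1 ts2 u v : all tbl_ok ts1 -> all tbl_ok ts2 ->
  all (fun k => k < size ts1)%N u -> all (fun k => k < size ts2)%N v ->
  all (fun i => app ts1 u i == app ts2 v i) (iota 0 92) -> wP ts1 u = wP ts2 v.
Proof.
move=> H1 H2 Hu Hv H; apply/permP=> i; apply: ord_inj; rewrite (wP_app i H1 Hu) (wP_app i H2 Hv).
by apply/eqP; apply: (allP H); rewrite mem_iota /= add0n ltn_ord.
Qed.

Lemma wP_cat ts u v : wP ts (u ++ v) = wP ts u * wP ts v.
Proof. by elim: u => [|k u IH] /=; rewrite ?mul1g // IH mulgA. Qed.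

Lemma ptbls_ok : all tbl_ok ptbls. Proof. vm_compute. reflexivity. Qed.
Lemma xtbls_ok : all tbl_ok xtbls. Proof. vm_compute. reflexivity. Qed.

Definition xP (i : nat) := mkp (nth [::] xtbls i).
Definition pP (k : nat) := mkp (nth [::] ptbls k).

Lemma ev_xP w : ev xP w = wP xtbls w. Proof. by []. Qed.

Definition relw (i j : nat) := flatten (nseq (mm i j) [:: i; j]).

Lemma ev_pow (G : finGroupType) (e : nat -> G) i j n :
  (e i * e j) ^+ n = ev e (flatten (nseq n [:: i; j])).
Proof. by elim: n => [|n IH] //; rewrite expgS IH /= mulgA. Qed.

Definition C_rel : bool :=
  all (fun i => all (fun j => all (fun t => app xtbls (relw i j) t == t) (iota 0 92)) (iota 0 6)) (iota 0 6).
Lemma C_rel_ok : C_rel. Proof. vm_compute. reflexivity. Qed.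

Lemma xP_rel i j : (i < 6)%N -> (j < 6)%N -> (xP i * xP j) ^+ mm i j = 1.
Proof.
move=> Hi Hj; rewrite ev_pow ev_xP.
have H1 : all (fun k => k < size xtbls)%N (relw i j).
  apply/allP=> k; case/flattenP=> s /nseqP[-> _]; rewrite !inE.
  by case/orP=> /eqP ->.
have H3 : all (fun t => app xtbls (relw i j) t == app xtbls [::] t) (iota 0 92).
  have := allP (allP C_rel_ok i _) j; rewrite !mem_iota /= !add0n; move=> H.
  exact: H Hi Hj.
by move: (@wP_eq xtbls (relw i j) [::] xtbls_ok H1 isT H3); rewrite /relw => ->.
Qed.

End Perm_.
Import Perm_.

Module Low_.

Fixpoint lexlt (a b : seq nat) : bool :=
  match a, b with
  | x :: a', y :: b' => (x < y)%N || ((x == y) && lexlt a' b')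
  | [::], _ :: _ => true
  | _, _ => false
  end.
Definition lexle (a b : seq nat) := (a == b) || lexlt a b.

Lemma lexlt_irr : irreflexive lexlt.
Proof. by elim=> [|x a IH] //=; rewrite ltnn eqxx IH. Qed.

Lemma lexlt_trans : transitive lexlt.
Proof.
move=> b a c; elim: a b c => [|x a IH] [|y b] [|z c] //=.
case/orP=> [lxy|/andP[/eqP <- Hab]]; case/orP=> [lyz|/andP[/eqP <- Hbc]].
- by rewrite (ltn_trans lxy lyz).
- by rewrite lxy.
- by rewrite lyz.
- by rewrite eqxx (IH _ _ Hab Hbc) orbT.
Qed.

Definition key (w : seq nat) := map (app xtbls w) (iota 0 7).

Lemma C_sorted : sorted lexlt (sort lexle (map key AW6)).
Proof. vm_compute. reflexivity. Qed.
Lemma C_words : all (all (fun k => k < 6)%N) AW6.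
Proof. vm_compute. reflexivity. Qed.

Lemma sort_uniq_lex (s : seq (seq nat)) : sorted lexlt (sort lexle s) -> uniq s.
Proof.
move=> Hs; have Hp: perm_eq (sort lexle s) s by rewrite perm_sort.
rewrite -(perm_uniq Hp); exact: (sorted_uniq lexlt_trans lexlt_irr Hs).
Qed.

Lemma key_ev w : w \in AW6 -> key w = map (fun t => (ev xP w (inord t) : nat)) (iota 0 7).
Proof.
move=> Hw'; have Hw6a : all (fun k => k < 6)%N w by exact: (allP C_words w Hw').
clear Hw'; rewrite /key; apply/eq_in_map=> t.
rewrite mem_iota add0n => /andP[_ Ht].
have Hsx : size xtbls = 6%N by [].
have Hw6 : all (fun k => k < size xtbls)%N w by rewrite Hsx.
have Ht92 : (t < 92)%N by exact: ltn_trans Ht _.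
by rewrite ev_xP (wP_app _ xtbls_ok Hw6) (inordK Ht92).
Qed.

Lemma uniq_evAW : uniq (map (ev xP) AW6).
Proof.
have Hu := sort_uniq_lex C_sorted.
pose g (s : {perm 'I_92}) := map (fun t => (s (inord t) : nat)) (iota 0 7).
apply: (@map_uniq _ _ g); rewrite -map_comp.
have E: map (g \o ev xP) AW6 = map key AW6.
  clear Hu; apply/eq_in_map=> w Hw'; rewrite (key_ev Hw'); reflexivity.
rewrite E; exact: Hu.
Qed.

Lemma card_low (W : {group {perm 'I_92}}) :
  (forall i, (i < 6)%N -> xP i \in W) -> (23040 <= #|W|)%N.
Proof.
move=> HW.
have Hs : size (map (ev xP) AW6) = 23040%N by rewrite size_map chk_size.
have Hc : #|[seq ev xP w | w <- AW6]| = 23040%N by rewrite (card_uniqP uniq_evAW) Hs.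
suff: (#|[seq ev xP w | w <- AW6]| <= #|W|)%N by rewrite Hc.
apply: subset_leq_card; apply/subsetP=> x /mapP[w Hw ->].
have := allP C_words w Hw; clear Hw Hc Hs.
elim: w => [|k w IH] /=; first by rewrite group1.
by case/andP=> Hk Hw; rewrite groupM ?HW ?IH.
Qed.

End Low_.
Import Low_.

Module Mx_.
Import GRing.Theory Num.Theory.
Local Open Scope ring_scope.

Definition matl (M : seq (seq int)) : 'M[algC]_7 :=
  \matrix_(i, j) ((nth 0%Z (nth [::] M i) j)%:~R).
Definition vecr (v : seq int) : 'rV[algC]_7 := \row_j ((nth 0%Z v j)%:~R).

Lemma vml_ok v M : vecr v *m matl M = vecr (vml v M).
Proof.
apply/rowP=> j; rewrite !mxE /vml nth_mkseq //.
rewrite !big_ord_recl big_ord0 /= !mxE.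
rewrite !intrD !intrM addr0.
by do !congr (_ + _).
Qed.

Definition tpn (a b j : nat) : nat := if j == a.-1 then b.-1 else if j == b.-1 then a.-1 else j.

Lemma tpE a b (j : 'I_7) : (0 < a <= 7)%N -> (0 < b <= 7)%N -> (tp a b j : nat) = tpn a b j.
Proof.
move=> /andP[a0 a7] /andP[b0 b7].
have Ha : (ix a : nat) = a.-1 by rewrite /ix inordK // prednK // ltnS.
have Hb : (ix b : nat) = b.-1 by rewrite /ix inordK // prednK // ltnS.
rewrite /tp /tpn; case: tpermP => [->|->|/eqP Hja /eqP Hjb]; rewrite ?Ha ?Hb ?eqxx //.
- case: eqP => // E; by rewrite -Ha -Hb.
- rewrite -Ha -Hb (inj_eq val_inj) (negbTE Hja) (inj_eq val_inj) (negbTE Hjb) //.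
Qed.

Lemma b_intr (b : bool) : ((b : nat)%:Z)%:~R = (b%:R : algC).
Proof. by case: b. Qed.

Definition pmx_chk (a b : nat) (rows : seq (seq int)) : bool :=
  all (fun i => all (fun j => nth 0%Z (nth [::] rows i) j == ((i == tpn a b j) : nat)%:Z) (iota 0 7)) (iota 0 7).

Lemma pmx_tpE a b rows : (0 < a <= 7)%N -> (0 < b <= 7)%N -> pmx_chk a b rows ->
  pmx (tp a b) = matl rows.
Proof.
move=> Ha Hb H; apply/matrixP=> i j; rewrite !mxE.
have := allP (allP H i _) j; rewrite !mem_iota /= !add0n !ltn_ord => /(_ isT isT) /eqP ->.
by rewrite b_intr -tpE.
Qed.

Lemma pmx_links :
  [/\ pmx (tp 1 2) = matl (nth [::] Mall 0), pmx (tp 2 3) = matl (nth [::] Mall 1),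
      pmx (tp 3 4) = matl (nth [::] Mall 2), pmx (tp 5 6) = matl (nth [::] Mall 3)
    & pmx (tp 6 7) = matl (nth [::] Mall 4)].
Proof. by split; apply: pmx_tpE; vm_compute. Qed.

Lemma A_link : A = matl (nth [::] Mall 5). Proof. by []. Qed.

Definition Gm (k : nat) := matl (nth [::] Mall k).

Lemma Gm_act k (t : 'I_92) : (k < 6)%N ->
  vecr (nth [::] Tl t) *m Gm k = vecr (nth [::] Tl (pP k t)).
Proof.
move=> Hk; rewrite vml_ok /pP mkpE; last by apply: (allP ptbls_ok); apply: mem_nth.
have := allP (allP C1_ok k _) t; rewrite !mem_iota /= !add0n ltn_ord => /(_ Hk isT) /eqP ->.
by [].
Qed.

Definition f (s : {perm 'I_92}) : 'M[algC]_7 :=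
  \matrix_(i < 7, j < 7) ((nth 0%Z (nth [::] Tl (s (inord i))) j)%:~R).

Definition Q (s : {perm 'I_92}) :=
  forall t : 'I_92, vecr (nth [::] Tl t) *m f s = vecr (nth [::] Tl (s t)).

Definition C6 : bool :=
  all (fun i => all (fun j => nth 0%Z (nth [::] Tl i) j == (i == j : nat)%:Z) (iota 0 7)) (iota 0 7).
Lemma C6_ok : C6. Proof. vm_compute. reflexivity. Qed.

Lemma basis_ok (i : 'I_7) : vecr (nth [::] Tl (inord i : 'I_92)) = delta_mx 0 i.
Proof.
apply/rowP=> j; rewrite !mxE inordK; last exact: ltn_trans (ltn_ord i) _.
have := allP (allP C6_ok i _) j; rewrite !mem_iota /= !add0n !ltn_ord => /(_ isT isT) /eqP ->.
by rewrite b_intr eq_sym.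
Qed.

Lemma Q_eq (s : {perm 'I_92}) M :
  (forall t : 'I_92, vecr (nth [::] Tl t) *m M = vecr (nth [::] Tl (s t))) -> M = f s.
Proof.
move=> H; apply/matrixP=> i j.
have := congr1 (fun r : 'rV_7 => r 0 j) (H (inord i)).
by rewrite basis_ok -rowE !mxE => ->.
Qed.

Lemma Q_f (s : {perm 'I_92}) M : (forall t : 'I_92, vecr (nth [::] Tl t) *m M = vecr (nth [::] Tl (s t))) -> Q s.
Proof. by move=> H; rewrite /Q -(Q_eq H). Qed.

Lemma Q_mul (s1 s2 : {perm 'I_92}) : Q s1 -> Q s2 -> f (s1 * s2)%g = f s1 *m f s2 /\ Q (s1 * s2)%g.
Proof.
move=> H1 H2.
have H: forall t : 'I_92, vecr (nth [::] Tl t) *m (f s1 *m f s2) = vecr (nth [::] Tl ((s1 * s2)%g t)).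
  by move=> t; rewrite mulmxA H1 H2 permM.
by split; [rewrite -(Q_eq H) | exact: Q_f H].
Qed.

Lemma Q1 : f 1%g = 1%:M /\ Q 1%g.
Proof.
have H: forall t : 'I_92, vecr (nth [::] Tl t) *m 1%:M = vecr (nth [::] Tl ((1%g : {perm 'I_92}) t)).
  by move=> t; rewrite mulmx1 perm1.
by split; [rewrite -(Q_eq H) | exact: Q_f H].
Qed.

Lemma Q_pP k : (k < 6)%N -> f (pP k) = Gm k /\ Q (pP k).
Proof.
move=> Hk; have H := fun t => Gm_act t Hk.
by split; [rewrite -(Q_eq H) | exact: Q_f H].
Qed.

Definition C_dist : bool :=
  all (fun a => all (fun b => (a == b) || has (fun j => nth 0%Z (nth [::] Tl a) j != nth 0%Z (nth [::] Tl b) j) (iota 0 7)) (iota 0 92)) (iota 0 92).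
Lemma C_dist_ok : C_dist. Proof. vm_compute. reflexivity. Qed.

Lemma vecr_inj (a b : 'I_92) : vecr (nth [::] Tl a) = vecr (nth [::] Tl b) -> a = b.
Proof.
move=> H; apply/val_inj/eqP.
have := allP (allP C_dist_ok a _) b; rewrite !mem_iota !leq0n !add0n !ltn_ord => /(_ isT isT).
case/orP=> // Hh; have [j Hj0 Hne] := seq.hasP Hh; move: Hj0 Hne; rewrite mem_iota add0n => /andP[_ Hj] /eqP [].
have := congr1 (fun r : 'rV_7 => r 0 (Ordinal Hj)) H; rewrite !mxE /=.
exact: intr_inj.
Qed.

Lemma f_inj (s1 s2 : {perm 'I_92}) : Q s1 -> Q s2 -> f s1 = f s2 -> s1 = s2.
Proof.
move=> H1 H2 E; apply/permP=> t; apply: vecr_inj; by rewrite -H1 -H2 E.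
Qed.

End Mx_.
Import Mx_.

Module MainM_.
Import GRing.Theory Num.Theory.
Local Open Scope ring_scope.

Lemma join6 (G : finGroupType) (e : nat -> G) :
  (<[e 0%N]> <*> <[e 1%N]> <*> <[e 2%N]> <*> <[e 3%N]> <*> <[e 4%N]> <*> <[e 5%N]>)%g
  = <<[set e (val k) | k : 'I_6]>>%g.
Proof.
apply/eqP; rewrite eqEsubset; apply/andP; split.
  rewrite !join_subG !cycle_subG !mem_gen //; apply/imsetP.
  - by exists (@Ordinal 6 5 isT).
  - by exists (@Ordinal 6 4 isT).
  - by exists (@Ordinal 6 3 isT).
  - by exists (@Ordinal 6 2 isT).
  - by exists (@Ordinal 6 1 isT).
  - by exists (@Ordinal 6 0 isT).
rewrite gen_subG; apply/subsetP=> x /imsetP[[[|[|[|[|[|[|k]]]]]] Hk] _ ->] //=.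
- by do 5 (apply: (subsetP (joing_subl _ _))); exact: cycle_id.
- by do 4 (apply: (subsetP (joing_subl _ _))); apply: (subsetP (joing_subr _ _)); exact: cycle_id.
- by do 3 (apply: (subsetP (joing_subl _ _))); apply: (subsetP (joing_subr _ _)); exact: cycle_id.
- by do 2 (apply: (subsetP (joing_subl _ _))); apply: (subsetP (joing_subr _ _)); exact: cycle_id.
- by do 1 (apply: (subsetP (joing_subl _ _))); apply: (subsetP (joing_subr _ _)); exact: cycle_id.
- by apply: (subsetP (joing_subr _ _)); exact: cycle_id.
Qed.

Definition W : {group {perm 'I_92}} :=
  (<[xP 0]> <*> <[xP 1]> <*> <[xP 2]> <*> <[xP 3]> <*> <[xP 4]> <*> <[xP 5]>)%G.

Lemma W_gen : (W : {set {perm 'I_92}}) = <<[set xP (val k) | k : 'I_6]>>%g.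
Proof. exact: (join6 xP). Qed.

Lemma xP_in i : (i < 6)%N -> xP i \in W.
Proof. by move=> Hi; rewrite W_gen mem_gen //; apply/imsetP; exists (Ordinal Hi). Qed.

Lemma card_W : #|W| = 23040%N.
Proof.
apply/eqP; rewrite eqn_leq card_low ?andbT; last exact: xP_in.
by rewrite W_gen; apply: bound6; exact: xP_rel.
Qed.

Definition C_xp : bool :=
  all (fun i => all (fun t => app xtbls [:: i] t == app ptbls (nth [::] mlwords i) t) (iota 0 92)) (iota 0 6)
  && all (all (fun k => k < 6)%N) mlwords.
Lemma C_xp_ok : C_xp. Proof. vm_compute. reflexivity. Qed.
Definition C_px : bool :=
  all (fun k => all (fun t => app ptbls [:: k] t == app xtbls (nth [::] xwords k) t) (iota 0 92)) (iota 0 6)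
  && all (all (fun k => k < 6)%N) xwords.
Lemma C_px_ok : C_px. Proof. vm_compute. reflexivity. Qed.


Lemma xP_words i : (i < 6)%N -> xP i = wP ptbls (nth [::] mlwords i).
Proof.
move=> Hi; have /andP[H1 H2] := C_xp_ok.
have ->: xP i = wP xtbls [:: i] by rewrite /= mulg1.
have Hw : all (fun k => k < 6)%N (nth [::] mlwords i).
  apply: (allP H2); apply: mem_nth; exact: Hi.
have Hsx : size xtbls = 6%N by [].
have Hsp : size ptbls = 6%N by [].
apply: (wP_eq2 xtbls_ok ptbls_ok); first by rewrite Hsx /= Hi.
  by rewrite Hsp.
have Hi' : i \in iota 0 6 by rewrite mem_iota add0n.
exact: (allP H1 i Hi').
Qed.

Lemma pP_words k : (k < 6)%N -> pP k = wP xtbls (nth [::] xwords k).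
Proof.
move=> Hk; have /andP[H1 H2] := C_px_ok.
have ->: pP k = wP ptbls [:: k] by rewrite /= mulg1.
have Hw : all (fun k => k < 6)%N (nth [::] xwords k).
  apply: (allP H2); apply: mem_nth; exact: Hk.
have Hsx : size xtbls = 6%N by [].
have Hsp : size ptbls = 6%N by [].
apply: (wP_eq2 ptbls_ok xtbls_ok); first by rewrite Hsp /= Hk.
  by rewrite Hsx.
have Hk' : k \in iota 0 6 by rewrite mem_iota add0n.
exact: (allP H1 k Hk').
Qed.

Lemma ML_Gm k : (k < 6)%N -> ML (Gm k).
Proof.
case: pmx_links => E0 E1 E2 E3 E4.
case: k => [|[|[|[|[|[|k]]]]]] // _; apply: gen_base; rewrite /ML_gens /Gm.
- by left; rewrite E0.
- by right; left; rewrite E1.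
- by right; right; left; rewrite E2.
- by right; right; right; left; rewrite E3.
- by right; right; right; right; left; rewrite E4.
- by right; right; right; right; right; rewrite A_link.
Qed.

Lemma Q_wP w : all (fun k => k < 6)%N w -> Q (wP ptbls w) /\ ML (f (wP ptbls w)).
Proof.
elim: w => [|k w IH] /=.
  by move=> _; case: Q1 => E HQ; split=> //; rewrite E; exact: gen_one.
case/andP=> Hk Hw; have [Q2 M2] := IH Hw; have [E1 Q1'] := Q_pP Hk.
have [E Q3] := Q_mul Q1' Q2; split=> //.
by rewrite E; apply: gen_mul => //; rewrite E1; exact: ML_Gm.
Qed.

Lemma W_prop w : w \in W -> Q w /\ ML (f w).
Proof.
rewrite W_gen => /gen_prodgP[n [c Hc ->]].
apply: (big_ind (fun x => Q x /\ ML (f x))).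
- by case: Q1 => E HQ; split=> //; rewrite E; exact: gen_one.
- move=> x y [Qx Mx] [Qy My]; have [E Qxy] := Q_mul Qx Qy; split=> //.
  by rewrite E; exact: gen_mul.
move=> i _; have /imsetP[k _ ->] := Hc i.
rewrite (xP_words (ltn_ord k)); apply: Q_wP.
have /andP[_ H2] := C_xp_ok; apply: (allP H2); exact: mem_nth.
Qed.

Lemma wPx_in w : all (fun k => k < 6)%N w -> wP xtbls w \in W.
Proof.
elim: w => [|k w IH] /=; first by move=> _; rewrite group1.
by case/andP=> Hk Hw; rewrite groupM ?IH //; exact: xP_in.
Qed.

Lemma pP_in k : (k < 6)%N -> pP k \in W.
Proof.
move=> Hk; rewrite pP_words //; apply: wPx_in.
have /andP[_ H2] := C_px_ok; apply: (allP H2); exact: mem_nth.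
Qed.

Lemma ML_iff M : ML M <-> exists2 w, w \in W & f w = M.
Proof.
split; last by case=> w /W_prop [_ HM] <-.
elim=> {M} [|M HM|M N _ [w1 H1 <-] _ [w2 H2 <-]|M _ [w H <-] Hu].
- by exists 1%g; rewrite ?group1 //; case: Q1.
- have Hp : forall k, (k < 6)%N -> exists2 w, w \in W & f w = Gm k.
    by move=> k Hk; exists (pP k); [exact: pP_in | case: (Q_pP Hk)].
  case: pmx_links => E0 E1 E2 E3 E4.
  case: HM => [->|[->|[->|[->|[->|->]]]]].
  + by rewrite E0; exact: Hp.
  + by rewrite E1; exact: Hp.
  + by rewrite E2; exact: Hp.
  + by rewrite E3; exact: Hp.
  + by rewrite E4; exact: Hp.
  + by rewrite A_link; exact: Hp.
- exists (w1 * w2)%g; first by rewrite groupM.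
  by case: (Q_mul (proj1 (W_prop H1)) (proj1 (W_prop H2))).
- exists (w^-1)%g; first by rewrite groupV.
  have [E _] := Q_mul (proj1 (W_prop H)) (proj1 (W_prop (groupVr H))).
  rewrite mulgV (proj1 Q1) in E.
  by rewrite -[invmx _]mulmx1 E mulmxA mulVmx // mul1mx.
Qed.

End MainM_.
Import MainM_.

Module PresL2_.
Import GRing.Theory Num.Theory.
Local Open Scope ring_scope.

Section PresLemmas.
Local Open Scope group_scope.

Lemma sym_rel (G : finGroupType) (x y : G) n : x ^+ 2 = 1 -> y ^+ 2 = 1 -> (x * y) ^+ n = 1 -> (y * x) ^+ n = 1.
Proof.
move=> Hx Hy H.
have Ix : x^-1 = x by apply/eqP; rewrite eq_invg_mul -expg2 Hx.
have Iy : y^-1 = y by apply/eqP; rewrite eq_invg_mul -expg2 Hy.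
by rewrite -{1}Ix -{1}Iy -invMg expVgn H invg1.
Qed.

Lemma diag_rel (G : finGroupType) (x : G) : x ^+ 2 = 1 -> (x * x) ^+ 1 = 1.
Proof. by rewrite expg1 -expg2. Qed.

Lemma cox_to_pres (G : finGroupType) (e : nat -> G) :
  (forall i j, (i < 6)%N -> (j < 6)%N -> (e i * e j) ^+ mm i j = 1) ->
  [&& e 0%N ^+ 2 == 1, e 1%N ^+ 2 == 1, e 2%N ^+ 2 == 1, e 3%N ^+ 2 == 1, e 4%N ^+ 2 == 1, e 5%N ^+ 2 == 1, (e 0%N * e 1%N) ^+ 3 == 1, (e 1%N * e 2%N) ^+ 3 == 1, (e 2%N * e 3%N) ^+ 3 == 1, (e 3%N * e 4%N) ^+ 3 == 1, (e 3%N * e 5%N) ^+ 3 == 1, (e 0%N * e 2%N) ^+ 2 == 1, (e 0%N * e 3%N) ^+ 2 == 1, (e 0%N * e 4%N) ^+ 2 == 1, (e 0%N * e 5%N) ^+ 2 == 1, (e 1%N * e 3%N) ^+ 2 == 1, (e 1%N * e 4%N) ^+ 2 == 1, (e 1%N * e 5%N) ^+ 2 == 1, (e 2%N * e 4%N) ^+ 2 == 1, (e 2%N * e 5%N) ^+ 2 == 1 & (e 4%N * e 5%N) ^+ 2 == 1].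
Proof.
move=> He.
have S i : (i < 6)%N -> e i ^+ 2 = 1 by move=> Hi; have := He i i Hi Hi; rewrite /mm eqxx expg1 -expg2.
have r01 : (e 0%N * e 1%N) ^+ 3 = 1 := He 0%N 1%N isT isT.
have r12 : (e 1%N * e 2%N) ^+ 3 = 1 := He 1%N 2%N isT isT.
have r23 : (e 2%N * e 3%N) ^+ 3 = 1 := He 2%N 3%N isT isT.
have r34 : (e 3%N * e 4%N) ^+ 3 = 1 := He 3%N 4%N isT isT.
have r35 : (e 3%N * e 5%N) ^+ 3 = 1 := He 3%N 5%N isT isT.
have r02 : (e 0%N * e 2%N) ^+ 2 = 1 := He 0%N 2%N isT isT.
have r03 : (e 0%N * e 3%N) ^+ 2 = 1 := He 0%N 3%N isT isT.
have r04 : (e 0%N * e 4%N) ^+ 2 = 1 := He 0%N 4%N isT isT.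
have r05 : (e 0%N * e 5%N) ^+ 2 = 1 := He 0%N 5%N isT isT.
have r13 : (e 1%N * e 3%N) ^+ 2 = 1 := He 1%N 3%N isT isT.
have r14 : (e 1%N * e 4%N) ^+ 2 = 1 := He 1%N 4%N isT isT.
have r15 : (e 1%N * e 5%N) ^+ 2 = 1 := He 1%N 5%N isT isT.
have r24 : (e 2%N * e 4%N) ^+ 2 = 1 := He 2%N 4%N isT isT.
have r25 : (e 2%N * e 5%N) ^+ 2 = 1 := He 2%N 5%N isT isT.
have r45 : (e 4%N * e 5%N) ^+ 2 = 1 := He 4%N 5%N isT isT.
by rewrite !S // r01 r12 r23 r34 r35 r02 r03 r04 r05 r13 r14 r15 r24 r25 r45 !eqxx.
Qed.

Lemma pres_to_cox (G : finGroupType) (h1 h2 h3 h4 h5 h6 : G) :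
  [&& h1 ^+ 2 == 1, h2 ^+ 2 == 1, h3 ^+ 2 == 1, h4 ^+ 2 == 1, h5 ^+ 2 == 1, h6 ^+ 2 == 1, (h1 * h2) ^+ 3 == 1, (h2 * h3) ^+ 3 == 1, (h3 * h4) ^+ 3 == 1, (h4 * h5) ^+ 3 == 1, (h4 * h6) ^+ 3 == 1, (h1 * h3) ^+ 2 == 1, (h1 * h4) ^+ 2 == 1, (h1 * h5) ^+ 2 == 1, (h1 * h6) ^+ 2 == 1, (h2 * h4) ^+ 2 == 1, (h2 * h5) ^+ 2 == 1, (h2 * h6) ^+ 2 == 1, (h3 * h5) ^+ 2 == 1, (h3 * h6) ^+ 2 == 1 & (h5 * h6) ^+ 2 == 1] ->
  forall i j, (i < 6)%N -> (j < 6)%N ->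
    (nth 1 [:: h1; h2; h3; h4; h5; h6] i * nth 1 [:: h1; h2; h3; h4; h5; h6] j) ^+ mm i j = 1.
Proof.
move=> /andP[/eqP r0 /andP[/eqP r1 /andP[/eqP r2 /andP[/eqP r3 /andP[/eqP r4 /andP[/eqP r5 /andP[/eqP r6 /andP[/eqP r7 /andP[/eqP r8 /andP[/eqP r9 /andP[/eqP r10 /andP[/eqP r11 /andP[/eqP r12 /andP[/eqP r13 /andP[/eqP r14 /andP[/eqP r15 /andP[/eqP r16 /andP[/eqP r17 /andP[/eqP r18 /andP[/eqP r19 /eqP r20]]]]]]]]]]]]]]]]]]]].
case=> [|[|[|[|[|[|i]]]]]] // ; case=> [|[|[|[|[|[|j]]]]]] // _ _; rewrite /mm /=;
  first [ exact: diag_rel | assumption | (apply: sym_rel; assumption) ].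
Qed.

End PresLemmas.

End PresL2_.
Import PresL2_.

Module Pres5_.
Local Open Scope group_scope.

Fixpoint evf (gT : finGroupType) (e : seq gT) (f : Presentation.formula) : bool :=
  match f with
  | Presentation.Eq2 s t => Presentation.eval e s == Presentation.eval e t
  | Presentation.And f1 f2 => evf e f1 && evf e f2
  end.

Lemma and_relE (xT : finType) (x1 x2 : xT) r :
  Presentation.bool_of_rel (Presentation.and_rel x1 x2 r) = (x1 == x2) && Presentation.bool_of_rel r.
Proof. by case: r => //=; rewrite andbT. Qed.

Lemma relE (gT : finGroupType) (e : seq gT) f r :
  Presentation.bool_of_rel (Presentation.rel e f r) = evf e f && Presentation.bool_of_rel r.
Proof.
elim: f r => [s t|f1 IH1 f2 IH2] r /=; first exact: and_relE.
by rewrite IH1 IH2 andbA.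
Qed.

Lemma hom6 (gT : finGroupType) (G : {set gT})
  (F : Presentation.term -> Presentation.term -> Presentation.term -> Presentation.term ->
       Presentation.term -> Presentation.term -> Presentation.formula) (x1 x2 x3 x4 x5 x6 : gT) :
  (<[x1]> <*> <[x2]> <*> <[x3]> <*> <[x4]> <*> <[x5]> <*> <[x6]> == G) ->
  evf [:: x1; x2; x3; x4; x5; x6] (F (Presentation.Cst 0) (Presentation.Cst 1) (Presentation.Cst 2)
        (Presentation.Cst 3) (Presentation.Cst 4) (Presentation.Cst 5)) ->
  Presentation.hom G (fun a => Presentation.Generator (fun b => Presentation.Generator (fun c =>
    Presentation.Generator (fun d => Presentation.Generator (fun e => Presentation.Generator (fun f =>
    Presentation.Formula (F a b c d e f))))))).
Proof.
move=> HG Hf; apply/existsP; exists (x1, x2, x3, x4, x5, x6).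
by rewrite /= and_relE relE HG Hf.
Qed.

Lemma hom6_inv (gT : finGroupType) (G : {set gT})
  (F : Presentation.term -> Presentation.term -> Presentation.term -> Presentation.term ->
       Presentation.term -> Presentation.term -> Presentation.formula) :
  Presentation.hom G (fun a => Presentation.Generator (fun b => Presentation.Generator (fun c =>
    Presentation.Generator (fun d => Presentation.Generator (fun e => Presentation.Generator (fun f =>
    Presentation.Formula (F a b c d e f))))))) ->
  exists x : gT * gT * gT * gT * gT * gT, let: (x1, x2, x3, x4, x5, x6) := x in
  (<[x1]> <*> <[x2]> <*> <[x3]> <*> <[x4]> <*> <[x5]> <*> <[x6]> == G) &&
  evf [:: x1; x2; x3; x4; x5; x6] (F (Presentation.Cst 0) (Presentation.Cst 1) (Presentation.Cst 2)
        (Presentation.Cst 3) (Presentation.Cst 4) (Presentation.Cst 5)).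
Proof.
case/existsP=> [[[[[[x1 x2] x3] x4] x5] x6]] H; exists (x1, x2, x3, x4, x5, x6).
by move: H; rewrite /= and_relE relE andbT.
Qed.

Lemma part1 (gT : finGroupType) (e : nat -> gT) (G : {group gT}) :
  (forall i j, (i < 6)%N -> (j < 6)%N -> (e i * e j) ^+ mm i j = 1) ->
  G :=: <[e 0%N]> <*> <[e 1%N]> <*> <[e 2%N]> <*> <[e 3%N]> <*> <[e 4%N]> <*> <[e 5%N]> ->
  G \homg Grp (s1 : s2 : s3 : s4 : s5 : s6 :
     s1 ^+ 2, s2 ^+ 2, s3 ^+ 2, s4 ^+ 2, s5 ^+ 2, s6 ^+ 2,
     (s1 * s2) ^+ 3, (s2 * s3) ^+ 3, (s3 * s4) ^+ 3, (s4 * s5) ^+ 3,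
     (s4 * s6) ^+ 3,
     (s1 * s3) ^+ 2, (s1 * s4) ^+ 2, (s1 * s5) ^+ 2, (s1 * s6) ^+ 2,
     (s2 * s4) ^+ 2, (s2 * s5) ^+ 2, (s2 * s6) ^+ 2,
     (s3 * s5) ^+ 2, (s3 * s6) ^+ 2, (s5 * s6) ^+ 2).
Proof.
move=> He HG.
apply: (hom6 (x1 := e 0%N) (x2 := e 1%N) (x3 := e 2%N) (x4 := e 3%N) (x5 := e 4%N) (x6 := e 5%N)).
  by rewrite HG.
by rewrite /=; exact: (cox_to_pres He).
Qed.

Lemma expg_pair (A B : finGroupType) (a : A) (b : B) n : (a, b) ^+ n = (a ^+ n, b ^+ n).
Proof. by elim: n => [|n IH] //; rewrite !expgS IH. Qed.

Lemma WisD6 : is_W_D6 W.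
Proof.
rewrite /is_W_D6; apply: intro_isoGrp.
  by apply: (part1 xP_rel).
move=> rT H /hom6_inv [[[[[[h1 h2] h3] h4] h5] h6]] /andP[/eqP HH Hrel].
move: Hrel; rewrite /= => Hrel.
have Hh := pres_to_cox Hrel.
pose hh := nth 1 [:: h1; h2; h3; h4; h5; h6].
pose e' (i : nat) : {perm 'I_92} * rT := (xP i, hh i).
have He' : forall i j, (i < 6)%N -> (j < 6)%N -> (e' i * e' j) ^+ mm i j = 1.
  by move=> i j Hi Hj; rewrite /e' expg_pair xP_rel // Hh.
pose K := <<[set e' (val k) | k : 'I_6]>>%G.
have cK : #|K| <= 23040 := bound6 He'.
have fK : fst @* K = W.
  rewrite morphim_gen ?subsetT // morphimEsub ?subsetT // -imset_comp W_gen.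
  by congr <<_>>; apply: eq_imset.
have sK : snd @* K = H.
  rewrite morphim_gen ?subsetT // morphimEsub ?subsetT // -imset_comp -HH.
  have := join6 hh; rewrite /= => ->.
  by congr <<_>>; apply: eq_imset.
have iWK : W \isog K.
  rewrite isogEcard card_W cK andbT -{1}fK.
  exact: morphim_homg (subsetT _).
apply: (@homg_trans _ K).
  rewrite -{1}sK; exact: morphim_homg (subsetT _).
apply: isog_hom; rewrite isog_sym; exact iWK.
Qed.

End Pres5_.
Import Pres5_.

Local Open Scope ring_scope.

Theorem theorem6p1 :
  exists (gT : finGroupType) (W : {group gT}) (f : gT -> 'M[algC]_7),
    [/\ is_W_D6 W,
        #|W| = 23040%N,
        {in W &, forall x y, f (x * y)%g = f x *m f y},
        {in W &, injective f}
      & forall M, ML M <-> exists2 w, w \in W & f w = M].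
Proof.
exists _, W, f; split.
- exact: WisD6.
- exact: card_W.
- by move=> x y Hx Hy; case: (Q_mul (proj1 (W_prop Hx)) (proj1 (W_prop Hy))).
- by move=> x y Hx Hy; apply: f_inj; [exact: (proj1 (W_prop Hx)) | exact: (proj1 (W_prop Hy))].
- exact: ML_iff.
Qed.
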